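(* For every $\beta\in[0,1)$ and every $G\in\mathscr S$, there exists a sequence of functions $G_N:\widehat\Lambda_N/N\to\mathbb R$, $N\in\mathbb N$, with $G_N(0)=G_N(1)=0$ for all $N$, such that $$\sup_{x\in\widehat\Lambda_N}|G_N(\tfrac xN)-G(\tfrac xN)|\to0\quad\text{and}\quad\sup_{x\in\widehat\Lambda_N}|\mathcal A^NG_N(\tfrac xN)-\alpha G''(\tfrac xN)|\to0\quad(N\to\infty).$$
   Context: Fix $\alpha,\alpha_L,\alpha_R>0$, $\beta\in[0,1)$, $\Lambda_N=\{1,\dots,N-1\}$, $\widehat\Lambda_N=\{0,\dots,N\}$. $A^N$ is the generator of a random walk on $\widehat\Lambda_N$ absorbed at $\{0,N\}$: for $f:\widehat\Lambda_N\to\mathbb R$, $A^Nf(x)=\mathbf 1_{\{x\in\Lambda_N\}}N^2\sum_{y\in\Lambda_N,|y-x|=1}\alpha(f(y)-f(x))+\mathbf 1_{\{x=1\}}N^{2-\beta}\alpha_L(f(0)-f(1))+\mathbf 1_{\{x=N-1\}}N^{2-\beta}\alpha_R(f(N)-f(N-1))$ (so $A^Nf(0)=A^Nf(N)=0$). For $F:\widehat\Lambda_N/N\to\mathbb R$ set $\mathcal A^NF(\tfrac xN):=A^N[F(\tfrac\cdot N)](x)$. $\mathscr S$ is the Dirichlet test function space: with $\mathcal L$ the nonnegative self-adjoint operator $F\mapsto-\alpha F''$ on $L^2([0,1])$ with domain $\{F\in\mathcal W^{1,2}_0:F''\in L^2\}$, eigenvalues $\lambda_n$ and orthonormal eigenbasis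 $\psi_n$, $\mathscr S=\{F\in L^2:\sum_n(1+\lambda_n)^k\langle F,\psi_n\rangle^2<\infty\ \forall k\in\mathbb Z\}$; its elements are $\mathcal C^\infty([0,1])$ functions (derivatives extend continuously to $[0,1]$). *)

(* Defs.v *)
From Stdlib Require Import Reals Lra Lia List Bool.
Open Scope bool_scope.
From Coquelicot Require Import Coquelicot.
Open Scope R_scope.

(* A function F : Lambda_hat_N / N -> R is represented by f : nat -> R,
   with f x standing for F (x/N), x in {0,...,N}. *)

(* Generator A^N of the random walk on {0,...,N} absorbed at {0,N}:
   A^N f(x) = 1_{x in Lambda_N} [ N^2 sum_{y in Lambda_N, |y-x|=1} alpha (f y - f x)
              + 1_{x=1} N^{2-beta} alphaL (f 0 - f 1)
              + 1_{x=N-1} N^{2-beta} alphaR (f N - f (N-1)) ]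
   (so A^N f(0) = A^N f(N) = 0). *)
Definition genA (alpha alphaL alphaR beta : R) (N : nat) (f : nat -> R) (x : nat) : R :=
  if (1 <=? x)%nat && (x <? N)%nat then
      INR N ^ 2 * alpha *
        ((if (2 <=? x)%nat then f (x - 1)%nat - f x else 0)
       + (if (x + 1 <? N)%nat then f (x + 1)%nat - f x else 0))
    + (if (x =? 1)%nat then Rpower (INR N) (2 - beta) * alphaL * (f 0%nat - f 1%nat) else 0)
    + (if (x =? N - 1)%nat then Rpower (INR N) (2 - beta) * alphaR * (f N - f (N - 1)%nat) else 0)
  else 0.

(* sup_{x in {0,...,N}} h x, for h >= 0 (finite maximum). *)
Definition sup_grid (N : nat) (h : nat -> R) : R :=
  fold_right Rmax 0 (map h (seq 0 (S N))).

(* Eigenvalues / orthonormal eigenbasis of L F = - alpha F'' on L^2([0,1])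
   with Dirichlet boundary conditions:
   lambda_n = alpha (n pi)^2, psi_n(u) = sqrt 2 sin (n pi u), n >= 1. *)
Definition lam (alpha : R) (n : nat) : R := alpha * (INR n * PI) ^ 2.
Definition psi (n : nat) (u : R) : R := sqrt 2 * sin (INR n * PI * u).

Definition coef (F : R -> R) (n : nat) : R := RInt (fun u => F u * psi n u) 0 1.

Definition cont_on_01 (F : R -> R) : Prop :=
  forall x, 0 <= x <= 1 -> forall eps, 0 < eps -> exists delta, 0 < delta /\
    forall y, 0 <= y <= 1 -> Rabs (y - x) < delta -> Rabs (F y - F x) < eps.

Definition in_S (alpha : R) (G : R -> R) : Prop :=
  forall k : Z,
    ex_series (fun n : nat => powerRZ (1 + lam alpha (S n)) k * (coef G (S n)) ^ 2).

Definition second_deriv01 (G : R -> R) (u : R) : R :=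
  if Rlt_dec 0 u then
    if Rlt_dec u 1 then Derive_n G 2 u
    else Lim_seq (fun n => Derive_n G 2 (1 - / (INR n + 2)))
  else Lim_seq (fun n => Derive_n G 2 (/ (INR n + 2))).

(* Main.v *)
Require Import Defs.
From Stdlib Require Import Reals Lra Lia ZArith List.
From Coquelicot Require Import Coquelicot.
Open Scope R_scope.

Lemma norm_R (x : R) : norm x = Rabs x.
Proof. reflexivity. Qed.

Lemma tail_bound (a M : nat -> R) :
  (forall k, Rabs (a k) <= M k) -> ex_series M ->
  forall N, Rabs (Series a - sum_n a N) <= Series M - sum_n M N.
Proof.
  intros Ha HM N.
  assert (Hea : ex_series (fun k => Rabs (a k))).
  { apply (@ex_series_le R_AbsRing R_CompleteNormedModule) with M; auto. intros k; rewrite norm_R, Rabs_Rabsolu; auto. }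
  assert (Hea' : ex_series a) by (apply ex_series_Rabs; auto).
  rewrite (Series_incr_n a (S N)) by (lia || auto).
  rewrite (Series_incr_n M (S N)) by (lia || auto).
  simpl pred. rewrite !sum_n_Reals.
  replace (sum_f_R0 a N + Series (fun k : nat => a (S N + k)%nat) - sum_f_R0 a N)
    with (Series (fun k : nat => a (S N + k)%nat)) by ring.
  replace (sum_f_R0 M N + Series (fun k : nat => M (S N + k)%nat) - sum_f_R0 M N)
    with (Series (fun k : nat => M (S N + k)%nat)) by ring.
  eapply Rle_trans. apply Series_Rabs.
  apply (ex_series_incr_n (fun k => Rabs (a k)) (S N)); auto.
  apply Series_le. intros k; split; [apply Rabs_pos| apply Ha].
  apply (ex_series_incr_n M (S N)); auto.
Qed.
Lemma tail_lim (M : nat -> R) : ex_series M ->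
  is_lim_seq (fun N => Series M - sum_n M N) 0.
Proof.
  intros HM.
  replace 0 with (Series M - Series M) by ring.
  apply (is_lim_seq_minus _ _ (Series M) (Series M)).
  apply is_lim_seq_const.
  apply Series_correct. auto.
  unfold is_Rbar_minus, is_Rbar_plus; simpl. auto.
Qed.

Definition om (k : nat) : R := INR (S k) * PI.
Definition trm (c : nat -> R) (j k : nat) (u : R) : R :=
  c k * sqrt 2 * om k ^ j * sin (om k * u + INR j * (PI / 2)).
Definition ps (c : nat -> R) (j n : nat) (u : R) : R :=
  sum_n (fun k => trm c j k u) n.
Definition Sf (c : nat -> R) (j : nat) (u : R) : R :=
  Series (fun k => trm c j k u).
Definition Mb (c : nat -> R) (j k : nat) : R := Rabs (c k) * sqrt 2 * om k ^ j.

Lemma PI_gt1 : 1 < PI.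
Proof. pose proof PI2_3_2. lra. Qed.

Lemma om_ge1 k : 1 <= om k.
Proof.
  unfold om. pose proof PI_gt1. rewrite S_INR. pose proof (pos_INR k).
  replace 1 with (1 * 1) by ring. apply Rmult_le_compat; lra.
Qed.

Lemma om_pos k : 0 < om k.
Proof. pose proof (om_ge1 k); lra. Qed.

Lemma trm_bound c j k u : Rabs (trm c j k u) <= Mb c j k.
Proof.
  unfold trm, Mb. rewrite !Rabs_mult.
  rewrite (Rabs_right (sqrt 2)) by (apply Rle_ge, sqrt_pos).
  rewrite (Rabs_right (om k ^ j)) by (apply Rle_ge, pow_le; left; apply om_pos).
  rewrite <- (Rmult_1_r (Rabs (c k) * sqrt 2 * om k ^ j)) at 2.
  apply Rmult_le_compat_l.
  - apply Rmult_le_pos; [apply Rmult_le_pos; [apply Rabs_pos|apply sqrt_pos]|].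
    apply pow_le; left; apply om_pos.
  - apply Rabs_le. apply SIN_bound.
Qed.

Lemma Mb_series c j : ex_series (fun k => Rabs (c k) * om k ^ 3) -> (j <= 3)%nat ->
  ex_series (Mb c j).
Proof.
  intros H Hj.
  apply (@ex_series_le R_AbsRing R_CompleteNormedModule) with
    (fun k => sqrt 2 * (Rabs (c k) * om k ^ 3)).
  - intros k. rewrite norm_R. unfold Mb.
    rewrite Rabs_right.
    2:{ apply Rle_ge. apply Rmult_le_pos; [apply Rmult_le_pos; [apply Rabs_pos|apply sqrt_pos]|].
        apply pow_le; left; apply om_pos. }
    replace (sqrt 2 * (Rabs (c k) * om k ^ 3)) with (Rabs (c k) * sqrt 2 * om k ^ 3) by ring.
    apply Rmult_le_compat_l.
    + apply Rmult_le_pos; [apply Rabs_pos|apply sqrt_pos].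
    + apply Rle_pow; auto. apply om_ge1.
  - apply (ex_series_scal_l (V := R_NormedModule)). auto.
Qed.

Lemma trm_derive c j k u : is_derive (trm c j k) u (trm c (S j) k u).
Proof.
  unfold trm.
  evar (d : R).
  assert (is_derive (fun u => c k * sqrt 2 * om k ^ j * sin (om k * u + INR j * (PI / 2))) u d).
  { auto_derive. auto. unfold d. reflexivity. }
  replace (c k * sqrt 2 * om k ^ S j * sin (om k * u + INR (S j) * (PI / 2))) with d.
  exact H.
  unfold d. rewrite S_INR.
  replace (om k * u + (INR j + 1) * (PI / 2)) with (PI/2 + (om k * u + INR j * (PI / 2))) by ring.
  rewrite <- cos_sin. simpl. ring.
Qed.

Lemma ps_derive c j n u : is_derive (ps c j n) u (ps c (S j) n u).
Proof.
  unfold ps. apply (is_derive_sum_n (fun k u => trm c j k u)).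
  intros; apply trm_derive.
Qed.

Lemma ps_cont c j n u : continuous (ps c j n) u.
Proof. apply (ex_derive_continuous (K:=R_AbsRing) (V:=R_NormedModule)). eexists; apply ps_derive. Qed.

Lemma Sf_tail c j : ex_series (Mb c j) -> forall N u,
  Rabs (Sf c j u - ps c j N u) <= Series (Mb c j) - sum_n (Mb c j) N.
Proof.
  intros HM N u. unfold Sf, ps.
  apply (tail_bound (fun k => trm c j k u) (Mb c j)); auto.
  intros; apply trm_bound.
Qed.

Lemma trm_series c j u : ex_series (Mb c j) -> ex_series (fun k => trm c j k u).
Proof.
  intros H. apply (@ex_series_le R_AbsRing R_CompleteNormedModule) with (Mb c j); auto.
  intros; rewrite norm_R; apply trm_bound.
Qed.

Lemma ps_lim c j u : ex_series (Mb c j) ->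
  Lim_seq (fun n => ps c j n u) = Finite (Sf c j u).
Proof.
  intros H. apply is_lim_seq_unique. unfold ps, Sf.
  apply (Series_correct (fun k => trm c j k u)). apply trm_series; auto.
Qed.

Lemma ps_CVU c j : ex_series (Mb c j) -> CVU_dom (ps c j) (fun _ => True).
Proof.
  intros H eps.
  pose proof (tail_lim _ H) as HT. apply is_lim_seq_spec in HT.
  destruct (HT eps) as [N0 HN0].
  exists N0. intros n Hn x _.
  rewrite ps_lim by auto. simpl.
  eapply Rle_lt_trans. rewrite Rabs_minus_sym. apply Sf_tail; auto.
  specialize (HN0 n Hn). rewrite Rminus_0_r in HN0.
  eapply Rle_lt_trans; [apply Rle_abs|exact HN0].
Qed.

Lemma Sf_derive c j u : ex_series (Mb c j) -> ex_series (Mb c (S j)) ->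
  is_derive (Sf c j) u (Sf c (S j) u).
Proof.
  intros H1 H2.
  assert (HD : forall n x, Derive (ps c j n) x = ps c (S j) n x).
  { intros; apply is_derive_unique, ps_derive. }
  pose proof (CVU_Derive (ps c j) (fun _ => True) open_true
    ltac:(intros a b x _ _ _; exact I) (ps_CVU c j H1)
    ltac:(intros n x _; eexists; apply ps_derive)) as K.
  assert (K2 : forall n x, True -> continuity_pt (Derive (ps c j n)) x).
  { intros n x _. apply continuity_pt_filterlim.
    eapply continuous_ext. intros t; symmetry; apply HD. apply ps_cont. }
  specialize (K K2).
  assert (K3 : CVU_dom (fun n x => Derive (ps c j n) x) (fun _ => True)).
  { intros eps. destruct (ps_CVU c (S j) H2 eps) as [N HN]. exists N.
    intros n Hn x _. rewrite HD.
    rewrite (Lim_seq_ext _ (fun n0 => ps c (S j) n0 x)) by (intros; apply HD).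
    apply HN; auto. }
  specialize (K K3 u I).
  rewrite (Lim_seq_ext _ (fun n0 => ps c (S j) n0 u)) in K by (intros; apply HD).
  rewrite ps_lim in K by auto. simpl in K.
  eapply is_derive_ext; [|exact K].
  intros t. simpl. rewrite ps_lim by auto. reflexivity.
Qed.

Lemma Sf_bound c j u : ex_series (Mb c j) -> Rabs (Sf c j u) <= Series (Mb c j).
Proof.
  intros H. pose proof (Sf_tail c j H 0 u).
  unfold ps in H0. rewrite !sum_O in H0.
  pose proof (trm_bound c j 0 u).
  pose proof (Rabs_triang_inv (Sf c j u) (trm c j 0 u)). lra.
Qed.

Lemma Sf_cont c j u : ex_series (Mb c j) -> ex_series (Mb c (S j)) ->
  continuous (Sf c j) u.
Proof.
  intros; apply (ex_derive_continuous (K:=R_AbsRing) (V:=R_NormedModule)).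
  eexists; apply Sf_derive; auto.
Qed.

Lemma ex_series_inv_sq : ex_series (fun n => / (INR (S n)) ^ 2).
Proof.
  apply (@ex_series_le R_AbsRing R_CompleteNormedModule) with (fun n => 2 * (/ INR (S n) - / INR (S (S n)))).
  - intros n. rewrite norm_R. rewrite Rabs_right.
    2:{ apply Rle_ge. left; apply Rinv_0_lt_compat, pow_lt, lt_0_INR; lia. }
    rewrite !S_INR. pose proof (pos_INR n).
    assert (0 < INR n + 1) by lra.
    apply Rminus_le_0.
    replace (2 * (/ (INR n + 1) - / (INR n + 1 + 1)) - / (INR n + 1) ^ 2)
      with ((INR n) / ((INR n + 1)^2 * (INR n + 2))) by (field; lra).
    apply Rmult_le_pos; auto. left; apply Rinv_0_lt_compat.
    apply Rmult_lt_0_compat; [apply pow_lt|]; lra.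
  - exists 2. unfold is_series.
    apply (filterlim_ext (fun N => 2 * (1 - / INR (S (S N))))).
    + intros N. induction N.
      * rewrite sum_O. simpl. field.
      * rewrite sum_Sn, <- IHN. unfold plus; simpl. ring.
    + change (is_lim_seq (fun N => 2 * (1 - / INR (S (S N)))) 2).
      replace (Finite 2) with (Rbar_mult 2 (Finite (1 - 0))) by (simpl; f_equal; ring).
      apply (is_lim_seq_scal_l _ 2 (1 - 0)).
      apply (is_lim_seq_minus _ _ 1 0). apply is_lim_seq_const.
      apply (is_lim_seq_incr_1 (fun n => / INR (S n))).
      apply (is_lim_seq_incr_1 (fun n => / INR n)).
      replace (Finite 0) with (Rbar_inv p_infty) by reflexivity.
      apply is_lim_seq_inv. apply is_lim_seq_INR. discriminate.
      unfold is_Rbar_minus, is_Rbar_plus; simpl. auto.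
Qed.

Lemma decay alpha G : 0 < alpha -> in_S alpha G ->
  ex_series (fun k => Rabs (coef G (S k)) * om k ^ 3).
Proof.
  intros Ha HS. specialize (HS 4%Z).
  apply (@ex_series_le R_AbsRing R_CompleteNormedModule) with
    (fun n => / 2 * (/ alpha ^ 4 * (powerRZ (1 + lam alpha (S n)) 4 * coef G (S n) ^ 2))
              + / 2 * (/ INR (S n) ^ 2)).
  - intros n. rewrite norm_R.
    set (c := coef G (S n)). set (w := om n).
    assert (Hw : 1 <= w) by apply om_ge1.
    assert (Hpow : powerRZ (1 + lam alpha (S n)) 4 = (1 + alpha * w^2)^4).
    { simpl. unfold lam, w, om. ring. }
    rewrite Hpow.
    assert (HN : 1 <= INR (S n)) by (apply (le_INR 1); lia).
    assert (Hw2 : / w ^ 2 <= / INR (S n) ^ 2).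
    { apply Rinv_le_contravar. apply pow_lt; lra.
      unfold w, om. rewrite Rpow_mult_distr.
      rewrite <- (Rmult_1_r (INR (S n) ^ 2)) at 1.
      apply Rmult_le_compat_l. apply pow_le; lra.
      pose proof PI_gt1. replace 1 with (1^2) by ring. apply pow_incr; lra. }
    assert (H8 : w ^ 8 <= / alpha ^ 4 * (1 + alpha * w ^ 2) ^ 4).
    { replace (w ^ 8) with (/ alpha ^ 4 * (alpha * w ^ 2) ^ 4) by (field; lra).
      apply Rmult_le_compat_l. left; apply Rinv_0_lt_compat, pow_lt; lra.
      apply pow_incr. split. apply Rmult_le_pos; [lra| apply pow_le; lra]. lra. }
    assert (Hamgm : 2 * (Rabs c * w ^ 3) <= c ^ 2 * w ^ 8 + / w ^ 2).
    { assert (0 < w) by lra.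
      assert (Hsq : 0 <= (Rabs c * w ^ 4 - / w) ^ 2) by apply pow2_ge_0.
      replace ((Rabs c * w ^ 4 - / w) ^ 2) with
        (Rabs c ^ 2 * w ^ 8 - 2 * (Rabs c * w ^ 3) + / w ^ 2) in Hsq by (field; lra).
      rewrite pow2_abs in Hsq. lra. }
    rewrite Rabs_right.
    2:{ apply Rle_ge, Rmult_le_pos; [apply Rabs_pos| apply pow_le; lra]. }
    assert (c ^ 2 * w ^ 8 <= / alpha ^ 4 * ((1 + alpha * w ^ 2) ^ 4 * c ^ 2)).
    { replace (/ alpha ^ 4 * ((1 + alpha * w ^ 2) ^ 4 * c ^ 2)) with
        (c^2 * (/ alpha ^ 4 * (1 + alpha * w ^ 2) ^ 4)) by ring.
      apply Rmult_le_compat_l; auto. apply pow2_ge_0. }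
    lra.
  - apply (ex_series_plus (V := R_NormedModule)).
    + apply (ex_series_scal_l (V := R_NormedModule)).
      apply (ex_series_scal_l (V := R_NormedModule)). exact HS.
    + apply (ex_series_scal_l (V := R_NormedModule)). apply ex_series_inv_sq.
Qed.

Ltac reR := match goal with |- ?a = ?b => change (@eq R a b) end.

Lemma cR_mult (f g : R -> R) x : continuous f x -> continuous g x ->
  continuous (fun y => f y * g y) x.
Proof. intros; apply (continuous_mult (U:=R_UniformSpace) (K:=R_AbsRing)); auto. Qed.
Lemma cR_plus (f g : R -> R) x : continuous f x -> continuous g x ->
  continuous (fun y => f y + g y) x.
Proof. intros; apply (continuous_plus (U:=R_UniformSpace) (V:=R_NormedModule)); auto. Qed.
Lemma cR_minus (f g : R -> R) x : continuous f x -> continuous g x ->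
  continuous (fun y => f y - g y) x.
Proof. intros; apply (continuous_minus (U:=R_UniformSpace) (V:=R_NormedModule)); auto. Qed.
Lemma cR_const (a : R) x : continuous (fun _ : R => a) x.
Proof. apply (continuous_const (U:=R_UniformSpace) (V:=R_UniformSpace)). Qed.
Lemma cR_scal (a : R) (f : R -> R) x : continuous f x -> continuous (fun y => a * f y) x.
Proof. intros; apply cR_mult; auto; apply cR_const. Qed.
Lemma cR_der (f : R -> R) x : ex_derive f x -> continuous f x.
Proof. apply (ex_derive_continuous (K:=R_AbsRing) (V:=R_NormedModule)). Qed.

Lemma exRI (f : R -> R) a b : (forall x, continuous f x) -> ex_RInt f a b.
Proof. intros; apply (ex_RInt_continuous (V:=R_CompleteNormedModule)); auto. Qed.

Lemma RInt_minusR (f g : R -> R) a b : ex_RInt f a b -> ex_RInt g a b ->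
  RInt (fun x => f x - g x) a b = RInt f a b - RInt g a b.
Proof. intros; apply (RInt_minus (V:=R_CompleteNormedModule)); auto. Qed.
Lemma RInt_plusR (f g : R -> R) a b : ex_RInt f a b -> ex_RInt g a b ->
  RInt (fun x => f x + g x) a b = RInt f a b + RInt g a b.
Proof. intros; apply (RInt_plus (V:=R_CompleteNormedModule)); auto. Qed.
Lemma RInt_scalR (f : R -> R) a b k : ex_RInt f a b ->
  RInt (fun x => k * f x) a b = k * RInt f a b.
Proof. intros; apply (RInt_scal (V:=R_CompleteNormedModule)); auto. Qed.

Lemma RInt_extR (f g : R -> R) a b : (forall x, Rmin a b < x < Rmax a b -> f x = g x) ->
  RInt f a b = RInt g a b.
Proof. intros; apply (RInt_ext (V:=R_CompleteNormedModule)); auto. Qed.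

Lemma sin_nPI n : sin (INR n * PI) = 0.
Proof.
  induction n. simpl. rewrite Rmult_0_l; apply sin_0.
  rewrite S_INR, Rmult_plus_distr_r, Rmult_1_l, neg_sin, IHn. ring.
Qed.
Lemma cos_nPI2 n : cos (INR n * PI) ^ 2 = 1.
Proof. pose proof (sin2_cos2 (INR n * PI)). rewrite sin_nPI in H. unfold Rsqr in H. simpl. lra. Qed.

Lemma RInt_cos r : r <> 0 -> sin r = 0 -> RInt (fun u => cos (r * u)) 0 1 = 0.
Proof.
  intros Hr Hs. apply is_RInt_unique.
  assert (H := is_RInt_derive (V:=R_CompleteNormedModule) (fun u => sin (r * u) / r)
     (fun u => cos (r * u)) 0 1).
  cbv beta in H.
  assert (H1 : forall x, Rmin 0 1 <= x <= Rmax 0 1 -> is_derive (fun u : R => sin (r * u) / r) x (cos (r * x))).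
  { intros x _. auto_derive; auto. field; auto. }
  assert (H2 : forall x, Rmin 0 1 <= x <= Rmax 0 1 -> continuous (fun u : R => cos (r * u)) x).
  { intros x _. apply cR_der. auto_derive; auto. }
  specialize (H H1 H2).
  match type of H with is_RInt _ _ _ ?v => replace v with 0 in H end. exact H.
  rewrite Rmult_1_r, Rmult_0_r, sin_0, Hs. unfold minus, plus, opp; simpl. field; auto.
Qed.

Lemma RInt_cos0 : RInt (fun u => cos (0 * u)) 0 1 = 1.
Proof.
  rewrite (RInt_extR _ (fun _ => 1)). rewrite RInt_const. unfold scal; simpl; unfold mult; simpl; ring.
  intros; rewrite Rmult_0_l, cos_0; auto.
Qed.

Definition sn (i : nat) (u : R) := sin (om i * u).

Lemma cont_sn i x : continuous (sn i) x.
Proof. apply cR_der. unfold sn. auto_derive; auto. Qed.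

Lemma ortho k i : RInt (fun u => 2 * (sn k u * sn i u)) 0 1 = if Nat.eq_dec k i then 1 else 0.
Proof.
  rewrite (RInt_extR _ (fun u => cos ((om k - om i) * u) - cos ((om k + om i) * u))).
  2:{ intros x _. unfold sn.
      replace ((om k - om i) * x) with (om k * x - om i * x) by ring.
      replace ((om k + om i) * x) with (om k * x + om i * x) by ring.
      rewrite cos_minus, cos_plus. ring. }
  assert (Hsp : sin (om k + om i) = 0).
  { unfold om. replace (INR (S k) * PI + INR (S i) * PI) with (INR (S k + S i) * PI)
      by (rewrite plus_INR; ring). apply sin_nPI. }
  assert (Hp : om k + om i <> 0). { pose proof (om_pos k); pose proof (om_pos i); lra. }
  rewrite RInt_minusR.
  2:{ apply exRI; intros; apply cR_der; auto_derive; auto. }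
  2:{ apply exRI; intros; apply cR_der; auto_derive; auto. }
  rewrite (RInt_cos (om k + om i)) by auto.
  match goal with |- ?a = ?b => change (@eq R a b) end.
  destruct (Nat.eq_dec k i).
  - subst. replace (om i - om i) with 0 by ring. rewrite RInt_cos0. ring.
  - rewrite RInt_cos. ring.
    + unfold om. intro H. apply n. apply INR_eq.
      assert (INR (S k) = INR (S i)). { pose proof PI_RGT_0. nra. }
      rewrite !S_INR in H0. lra.
    + unfold om. rewrite <- Rmult_minus_distr_r, Rmult_minus_distr_r, sin_minus, !sin_nPI. ring.
Qed.

Lemma cont_psi n x : continuous (psi n) x.
Proof. apply cR_der. unfold psi. auto_derive; auto. Qed.

Lemma cont_trm c j k x : continuous (trm c j k) x.
Proof. apply cR_der. eexists. apply trm_derive. Qed.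

Lemma RInt_trm_psi c k i :
  RInt (fun u => trm c 0 k u * psi (S i) u) 0 1 = c k * (if Nat.eq_dec k i then 1 else 0).
Proof.
  rewrite (RInt_extR _ (fun u => c k * (2 * (sn k u * sn i u)))).
  2:{ intros x _. unfold trm, psi, sn. rewrite INR_0, Rmult_0_l, Rplus_0_r, pow_O.
      change (INR (S i) * PI) with (om i).
      pose proof (sqrt_sqrt 2 ltac:(lra)).
      transitivity (c k * (sqrt 2 * sqrt 2) * (sin (om k * x) * sin (om i * x))). ring.
      rewrite H. ring. }
  rewrite RInt_scalR. rewrite ortho. reflexivity.
  apply exRI. intros; apply cR_scal, cR_mult; apply cont_sn.
Qed.

Lemma RInt_ps_psi c N i :
  RInt (fun u => ps c 0 N u * psi (S i) u) 0 1 = if Compare_dec.le_dec i N then c i else 0.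
Proof.
  induction N.
  - rewrite (RInt_extR _ (fun u => trm c 0 0 u * psi (S i) u)).
    2:{ intros; unfold ps; rewrite sum_O; auto. }
    rewrite RInt_trm_psi. destruct (Nat.eq_dec 0 i), (Compare_dec.le_dec i 0); try lia; subst; reR; ring.
  - rewrite (RInt_extR _ (fun u => ps c 0 N u * psi (S i) u + trm c 0 (S N) u * psi (S i) u)).
    2:{ intros; unfold ps; rewrite sum_Sn; unfold plus; simpl. ring. }
    rewrite RInt_plusR. rewrite IHN, RInt_trm_psi.
    destruct (Nat.eq_dec (S N) i), (Compare_dec.le_dec i N), (Compare_dec.le_dec i (S N)); try lia; subst; reR; ring.
    + apply exRI; intros; apply cR_mult; [apply ps_cont|apply cont_psi].
    + apply exRI; intros; apply cR_mult; [apply cont_trm|apply cont_psi].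
Qed.

Lemma zero_of_tail (x : R) (t : nat -> R) N0 :
  (forall N, (N0 <= N)%nat -> Rabs x <= t N) -> is_lim_seq t 0 -> x = 0.
Proof.
  intros H Ht. destruct (Req_dec x 0) as [|Hx]; auto.
  exfalso. apply is_lim_seq_spec in Ht.
  assert (Hp : 0 < Rabs x) by (apply Rabs_pos_lt; auto).
  destruct (Ht (mkposreal _ Hp)) as [N1 HN1].
  specialize (HN1 (max N0 N1) ltac:(lia)). specialize (H (max N0 N1) ltac:(lia)).
  simpl in HN1. rewrite Rminus_0_r in HN1. pose proof (Rle_abs (t (max N0 N1))). lra.
Qed.

Lemma coef_Sf c i : ex_series (Mb c 0) -> ex_series (Mb c 1) ->
  RInt (fun u => Sf c 0 u * psi (S i) u) 0 1 = c i.
Proof.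
  intros H0 H1.
  apply Rminus_diag_uniq.
  apply (zero_of_tail _ (fun N => sqrt 2 * (Series (Mb c 0) - sum_n (Mb c 0) N)) i).
  - intros N HN.
    assert (E := RInt_ps_psi c N i). destruct (Compare_dec.le_dec i N) in E; try lia.
    rewrite <- E.
    rewrite <- RInt_minusR.
    2:{ apply exRI; intros; apply cR_mult; [apply Sf_cont; auto|apply cont_psi]. }
    2:{ apply exRI; intros; apply cR_mult; [apply ps_cont|apply cont_psi]. }
    eapply Rle_trans. apply abs_RInt_le_const with (M := sqrt 2 * (Series (Mb c 0) - sum_n (Mb c 0) N)).
    lra.
    apply exRI; intros; apply cR_minus; apply cR_mult;
      try apply cont_psi; try apply ps_cont; apply Sf_cont; auto.
    + intros t _. 
      replace (Sf c 0 t * psi (S i) t - ps c 0 N t * psi (S i) t)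
        with ((Sf c 0 t - ps c 0 N t) * psi (S i) t) by ring.
      rewrite Rabs_mult, Rmult_comm.
      apply Rmult_le_compat. apply Rabs_pos. apply Rabs_pos.
      unfold psi. rewrite Rabs_mult, Rabs_right by (apply Rle_ge, sqrt_pos).
      rewrite <- (Rmult_1_r (sqrt 2)) at 2. apply Rmult_le_compat_l. apply sqrt_pos.
      apply Rabs_le, SIN_bound.
      apply Sf_tail; auto.
    + lra.
  - replace 0 with (sqrt 2 * 0) by ring.
    apply (is_lim_seq_scal_l _ (sqrt 2) 0). apply tail_lim; auto.
Qed.

Fixpoint sumk (f : nat -> R) (n : nat) : R :=
  match n with 0 => f 0%nat | S m => sumk f m + f (S m) end.

Lemma sumk_ext f g n : (forall k, (k <= n)%nat -> f k = g k) -> sumk f n = sumk g n.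
Proof. induction n; simpl; intros H. apply H; lia. rewrite IHn, H; auto. Qed.
Lemma sumk_plus f g n : sumk (fun k => f k + g k) n = sumk f n + sumk g n.
Proof. induction n; simpl; auto. rewrite IHn; ring. Qed.
Lemma sumk_scal a f n : sumk (fun k => a * f k) n = a * sumk f n.
Proof. induction n; simpl; auto. rewrite IHn; ring. Qed.
Lemma sumk_shift f n : sumk f (S n) = f 0%nat + sumk (fun k => f (S k)) n.
Proof. induction n. simpl. ring. change (sumk f (S (S n))) with (sumk f (S n) + f (S (S n))).
  rewrite IHn. simpl. ring. Qed.
Lemma sumk_le f g n : (forall k, (k <= n)%nat -> f k <= g k) -> sumk f n <= sumk g n.
Proof. induction n; simpl; intros H. apply H; lia. apply Rplus_le_compat; auto. Qed.
Lemma sumk_abs f n : Rabs (sumk f n) <= sumk (fun k => Rabs (f k)) n.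
Proof. induction n; simpl. lra. eapply Rle_trans. apply Rabs_triang. lra. Qed.

Lemma sumk_minus f g n : sumk (fun k => f k - g k) n = sumk f n - sumk g n.
Proof. induction n; simpl; auto. rewrite IHn; ring. Qed.

Fixpoint bb (n k : nat) (y : R) : R :=
  match n with
  | 0%nat => match k with 0%nat => 1 | S _ => 0 end
  | S n' => match k with
            | 0%nat => (1 - y) * bb n' 0 y
            | S k' => (1 - y) * bb n' (S k') y + y * bb n' k' y
            end
  end.

Lemma bb_nonneg n k y : 0 <= y <= 1 -> 0 <= bb n k y.
Proof.
  intros Hy. revert k. induction n; intros k; destruct k; simpl; try lra.
  apply Rmult_le_pos; [lra|auto].
  apply Rplus_le_le_0_compat; apply Rmult_le_pos; auto; lra.
Qed.

Lemma bb_zero n k y : (n < k)%nat -> bb n k y = 0.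
Proof.
  revert k. induction n; intros k Hk; destruct k; simpl; try lia; auto.
  rewrite !IHn by lia. ring.
Qed.

Lemma bb_shift g n y :
  sumk (fun k => g k * bb (S n) k y) (S n) =
  sumk (fun k => ((1 - y) * g k + y * g (S k)) * bb n k y) n.
Proof.
  rewrite sumk_shift.
  rewrite (sumk_ext (fun k => g (S k) * bb (S n) (S k) y)
     (fun k => (1 - y) * (g (S k) * bb n (S k) y) + y * (g (S k) * bb n k y)))
    by (intros; simpl; ring).
  rewrite sumk_plus, !sumk_scal.
  rewrite (sumk_ext (fun k => ((1 - y) * g k + y * g (S k)) * bb n k y)
     (fun k => (1 - y) * (g k * bb n k y) + y * (g (S k) * bb n k y))) by (intros; ring).
  rewrite sumk_plus, !sumk_scal.
  assert (E : sumk (fun k => g k * bb n k y) (S n) = g 0%nat * bb n 0 y + sumk (fun k => g (S k) * bb n (S k) y) n)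
    by apply sumk_shift.
  simpl in E. rewrite (bb_zero n (S n)) in E by lia.
  rewrite Rmult_0_r, Rplus_0_r in E. rewrite E. simpl bb. ring.
Qed.

Lemma bb_m0 n y : sumk (fun k => bb n k y) n = 1.
Proof.
  induction n. reflexivity.
  rewrite (sumk_ext _ (fun k => 1 * bb (S n) k y)) by (intros; ring).
  rewrite bb_shift. transitivity (sumk (fun k => bb n k y) n); auto. apply sumk_ext. intros; ring.
Qed.

Lemma bb_m1 n y : sumk (fun k => INR k * bb n k y) n = INR n * y.
Proof.
  induction n. simpl. ring.
  rewrite bb_shift.
  rewrite (sumk_ext _ (fun k => INR k * bb n k y + y * bb n k y))
    by (intros; rewrite S_INR; ring).
  rewrite sumk_plus, sumk_scal, IHn, bb_m0, S_INR. ring.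
Qed.

Lemma bb_m2 n y : sumk (fun k => INR k ^ 2 * bb n k y) n = INR n ^ 2 * y ^ 2 + INR n * y * (1 - y).
Proof.
  induction n. simpl. ring.
  rewrite bb_shift.
  rewrite (sumk_ext _ (fun k => INR k ^ 2 * bb n k y + (2 * y) * (INR k * bb n k y) + y * bb n k y))
    by (intros; rewrite S_INR; ring).
  rewrite !sumk_plus, !sumk_scal, IHn, bb_m1, bb_m0, S_INR. ring.
Qed.

Lemma bb_var n y : (0 < n)%nat ->
  sumk (fun k => (INR k / INR n - y) ^ 2 * bb n k y) n = y * (1 - y) / INR n.
Proof.
  intros Hn. assert (0 < INR n) by (apply lt_0_INR; auto).
  rewrite (sumk_ext _ (fun k => / INR n ^ 2 * (INR k ^ 2 * bb n k y) + (- 2 * y / INR n) * (INR k * bb n k y) + y^2 * bb n k y))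
    by (intros; field; lra).
  rewrite !sumk_plus, !sumk_scal, bb_m2, bb_m1, bb_m0. field. lra.
Qed.

Definition Bp (h : R -> R) (n : nat) (y : R) : R :=
  sumk (fun k => h (INR k / INR n) * bb n k y) n.

Lemma bern_approx (h : R -> R) (M : R) :
  (forall y, 0 <= y <= 1 -> Rabs (h y) <= M) ->
  (forall eps, 0 < eps -> exists delta, 0 < delta /\ forall y1 y2, 0 <= y1 <= 1 -> 0 <= y2 <= 1 ->
     Rabs (y1 - y2) < delta -> Rabs (h y1 - h y2) <= eps) ->
  forall eps, 0 < eps -> exists n, (0 < n)%nat /\ forall y, 0 <= y <= 1 -> Rabs (Bp h n y - h y) <= 2 * eps.
Proof.
  intros HM Hu eps Heps.
  destruct (Hu eps Heps) as [d [Hd Hdu]].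
  assert (HM0 : 0 <= M) by (specialize (HM 0 ltac:(lra)); pose proof (Rabs_pos (h 0)); lra).
  destruct (archimed (2 * M / (d ^ 2 * eps))) as [Hn _].
  set (z := up (2 * M / (d ^ 2 * eps))) in *.
  assert (Hz : (0 < z)%Z).
  { apply lt_IZR. eapply Rle_lt_trans; [|exact Hn]. apply Rmult_le_pos.
    lra. left; apply Rinv_0_lt_compat, Rmult_lt_0_compat; [apply pow_lt|]; lra. }
  exists (Z.to_nat z). split. lia.
  set (n := Z.to_nat z).
  assert (HnR : INR n = IZR z). { unfold n. rewrite INR_IZR_INZ, Z2Nat.id; auto; lia. }
  assert (Hn0 : 0 < INR n) by (rewrite HnR; apply IZR_lt; auto).
  intros y Hy.
  assert (Hsum : h y = sumk (fun k => h y * bb n k y) n).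
  { rewrite sumk_scal, bb_m0. ring. }
  unfold Bp. rewrite Hsum. rewrite <- sumk_minus.
  eapply Rle_trans. apply sumk_abs.
  eapply Rle_trans. apply sumk_le with
    (g := fun k => eps * bb n k y + (2 * M / d ^ 2) * ((INR k / INR n - y) ^ 2 * bb n k y)).
  { intros k Hk.
    assert (Hb := bb_nonneg n k y Hy).
    assert (Hkn : 0 <= INR k / INR n <= 1).
    { split. apply Rmult_le_pos; [apply pos_INR| left; apply Rinv_0_lt_compat; auto].
      apply (Rmult_le_reg_r (INR n)); auto. unfold Rdiv. rewrite Rmult_assoc, Rinv_l by lra.
      rewrite Rmult_1_r, Rmult_1_l. apply le_INR; auto. }
    replace (h (INR k / INR n) * bb n k y - h y * bb n k y) with ((h (INR k / INR n) - h y) * bb n k y) by ring.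
    rewrite Rabs_mult, (Rabs_right (bb n k y)) by lra.
    replace (eps * bb n k y + 2 * M / d ^ 2 * ((INR k / INR n - y) ^ 2 * bb n k y))
      with ((eps + 2 * M / d ^ 2 * (INR k / INR n - y) ^ 2) * bb n k y) by ring.
    apply Rmult_le_compat_r; auto.
    assert (0 <= 2 * M / d ^ 2 * (INR k / INR n - y) ^ 2).
    { apply Rmult_le_pos. apply Rmult_le_pos. lra. left; apply Rinv_0_lt_compat, pow_lt; lra. apply pow2_ge_0. }
    destruct (Rlt_dec (Rabs (INR k / INR n - y)) d) as [Hl|Hl].
    - specialize (Hdu _ _ Hkn Hy Hl). lra.
    - apply Rnot_lt_le in Hl.
      assert (d ^ 2 <= (INR k / INR n - y) ^ 2).
      { rewrite <- (pow2_abs (INR k / INR n - y)). apply pow_incr. lra. }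
      assert (2 * M <= 2 * M / d ^ 2 * (INR k / INR n - y) ^ 2).
      { replace (2 * M) with (2 * M / d ^ 2 * d ^ 2) at 1 by (field; lra).
        apply Rmult_le_compat_l; auto. apply Rmult_le_pos. lra. left; apply Rinv_0_lt_compat, pow_lt; lra. }
      pose proof (HM _ Hkn). pose proof (HM _ Hy).
      pose proof (Rabs_triang (h (INR k / INR n)) (- h y)) as Htr. rewrite Rabs_Ropp in Htr.
      unfold Rminus. lra. }
  rewrite sumk_plus, !sumk_scal, bb_m0, bb_var by lia.
  assert (y * (1 - y) <= 1) by nra.
  assert (2 * M / d ^ 2 * (y * (1 - y) / INR n) <= eps).
  { assert (HnR' : 2 * M / (d ^ 2 * eps) < INR n) by (rewrite HnR; auto).
    assert (0 < d ^ 2) by (apply pow_lt; lra).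
    apply (Rmult_lt_compat_r (d ^ 2 * eps)) in HnR'. 2: apply Rmult_lt_0_compat; lra.
    unfold Rdiv in HnR'. rewrite Rmult_assoc, Rinv_l in HnR' by (apply Rgt_not_eq, Rmult_lt_0_compat; lra).
    apply (Rmult_le_reg_r (INR n)); auto.
    replace (2 * M / d ^ 2 * (y * (1 - y) / INR n) * INR n) with (2 * M * (y * (1 - y)) / d ^ 2) by (field; lra).
    apply (Rmult_le_reg_r (d ^ 2)); auto.
    replace (2 * M * (y * (1 - y)) / d ^ 2 * d ^ 2) with (2 * M * (y * (1 - y))) by (field; lra).
    assert (0 <= y * (1 - y)) by nra.
    assert (2 * M * (y * (1 - y)) <= 2 * M) by nra. lra. }
  lra.
Qed.

Lemma cont_eps (f : R -> R) x0 : continuous f x0 ->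
  forall eps, 0 < eps -> exists delta, 0 < delta /\
    forall x, Rabs (x - x0) < delta -> Rabs (f x - f x0) < eps.
Proof.
  intros Hc eps He.
  destruct (proj1 (filterlim_locally f (f x0)) Hc (mkposreal _ He)) as [d Hd].
  exists d. split. apply cond_pos. intros x Hx. apply (Hd x). exact Hx.
Qed.

Lemma sin_lb3 s : 0 <= s <= 2 -> s / 3 <= sin s.
Proof.
  intros Hs. pose proof PI2_3_2. pose proof PI_4.
  destruct (SIN s) as [HS _]; try lra.
  eapply Rle_trans; [|exact HS]. unfold sin_lb, sin_approx, sin_term. simpl.
  unfold Rdiv. 
  assert (0 <= s ^ 2 <= 4) by nra.
  assert (0 <= s^5 * (42 - s^2)).
  { apply Rmult_le_pos. apply pow_le; lra. nra. }
  assert (s * (1 - s^2/6) >= s/3) by nra.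
  simpl in *. field_simplify. nra.
Qed.

Lemma cos_diff_lb u v : 0 <= v <= u -> u <= PI -> (u - v) ^ 2 / 18 <= cos v - cos u.
Proof.
  intros Hv Hu. pose proof PI2_3_2. pose proof PI_4.
  set (m := (u + v) / 2). set (s := (u - v) / 2).
  replace ((u - v) ^ 2 / 18) with (2 * (s / 3 * (s / 3))) by (unfold s; field).
  replace v with (m - s) by (unfold m, s; field).
  replace u with (m + s) by (unfold m, s; field).
  rewrite cos_minus, cos_plus.
  replace (cos m * cos s + sin m * sin s - (cos m * cos s - sin m * sin s)) with (2 * sin m * sin s) by ring.
  assert (Hs : 0 <= s <= PI / 2) by (unfold s; lra).
  assert (Hsm : sin s <= sin m).
  { destruct (Rle_dec m (PI / 2)).
    - apply sin_incr_1; unfold m, s in *; lra.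
    - rewrite <- (sin_PI_x m). apply sin_incr_1; unfold m, s in *; lra. }
  assert (Hs3 : s / 3 <= sin s) by (apply sin_lb3; lra).
  assert (0 <= s / 3) by lra.
  assert (s / 3 * (s / 3) <= sin s * sin s) by (apply Rmult_le_compat; lra).
  assert (sin s * sin s <= sin m * sin s) by (apply Rmult_le_compat_r; lra).
  rewrite Rmult_assoc. lra.
Qed.

Definition yv (u : R) : R := (1 - cos (PI * u)) / 2.
Definition gy (y : R) : R := acos (1 - 2 * y) / PI.

Lemma yv_range x : 0 <= x <= 1 -> 0 <= yv x <= 1.
Proof. intros. unfold yv. pose proof (COS_bound (PI * x)). lra. Qed.

Lemma gy_range y : 0 <= gy y <= 1.
Proof.
  unfold gy. pose proof (acos_bound (1 - 2 * y)). pose proof PI_RGT_0.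
  split. apply Rmult_le_pos; [lra| left; apply Rinv_0_lt_compat; lra].
  apply (Rmult_le_reg_r PI); auto. unfold Rdiv. rewrite Rmult_assoc, Rinv_l; lra.
Qed.

Lemma yv_gy y : 0 <= y <= 1 -> yv (gy y) = y.
Proof.
  intros. unfold yv, gy. replace (PI * (acos (1 - 2 * y) / PI)) with (acos (1 - 2 * y))
    by (field; pose proof PI_RGT_0; lra).
  rewrite cos_acos by lra. field.
Qed.

Lemma gy_yv x : 0 <= x <= 1 -> gy (yv x) = x.
Proof.
  intros. unfold yv, gy. pose proof PI_RGT_0.
  replace (1 - 2 * ((1 - cos (PI * x)) / 2)) with (cos (PI * x)) by field.
  rewrite acos_cos. field. lra. split; nra.
Qed.

Lemma x_mod x1 x2 : 0 <= x1 <= 1 -> 0 <= x2 <= 1 -> (x1 - x2) ^ 2 <= 36 * Rabs (yv x1 - yv x2).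
Proof.
  intros H1 H2. pose proof PI2_3_2.
  assert (forall a b, 0 <= a <= 1 -> 0 <= b <= 1 -> b <= a -> (a - b) ^ 2 <= 36 * Rabs (yv a - yv b)).
  { intros a b Ha Hb Hab.
    pose proof (cos_diff_lb (PI * a) (PI * b) ltac:(split; nra) ltac:(nra)).
    unfold yv. rewrite Rabs_right.
    2:{ apply Rle_ge. assert (0 <= (PI * a - PI * b) ^ 2 / 18) by (apply Rmult_le_pos; [apply pow2_ge_0|lra]). lra. }
    replace (PI * a - PI * b) with (PI * (a - b)) in H0 by ring.
    rewrite Rpow_mult_distr in H0.
    assert (1 <= PI ^ 2) by nra.
    assert (0 <= (a - b) ^ 2) by apply pow2_ge_0.
    nra. }
  destruct (Rle_dec x2 x1). apply H0; auto.
  replace ((x1 - x2) ^ 2) with ((x2 - x1) ^ 2) by ring. rewrite Rabs_minus_sym. apply H0; auto; lra.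
Qed.

Lemma gy_mod y1 y2 : 0 <= y1 <= 1 -> 0 <= y2 <= 1 -> (gy y1 - gy y2) ^ 2 <= 36 * Rabs (y1 - y2).
Proof.
  intros. pose proof (x_mod (gy y1) (gy y2) (gy_range _) (gy_range _)).
  rewrite !yv_gy in H1; auto.
Qed.

Section Uniq.
Variable Dfun : R -> R.
Hypothesis HDc : forall x, continuous Dfun x.
Hypothesis HD0 : forall i, RInt (fun u => Dfun u * sn i u) 0 1 = 0.

Definition Qp (q : R -> R) : Prop :=
  (forall x, continuous q x) /\ forall i, RInt (fun u => Dfun u * sn i u * q u) 0 1 = 0.

Lemma Qp_ext q1 q2 : (forall u, q1 u = q2 u) -> Qp q1 -> Qp q2.
Proof.
  intros E [Hc Hi]. split.
  - intros x. eapply continuous_ext; [exact E| apply Hc].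
  - intros i. transitivity (RInt (fun u => Dfun u * sn i u * q1 u) 0 1); [|apply Hi].
    apply RInt_extR. intros; rewrite E; auto.
Qed.

Lemma Qp_one : Qp (fun _ => 1).
Proof.
  split. intros; apply cR_const.
  intros i. transitivity (RInt (fun u => Dfun u * sn i u) 0 1); [|apply HD0].
  apply RInt_extR. intros; ring.
Qed.

Lemma contDsn i x : continuous (fun u => Dfun u * sn i u) x.
Proof. apply cR_mult; auto. apply cont_sn. Qed.

Lemma Qp_lin a b q1 q2 : Qp q1 -> Qp q2 -> Qp (fun u => a * q1 u + b * q2 u).
Proof.
  intros [Hc1 Hi1] [Hc2 Hi2]. split.
  - intros x. apply cR_plus; apply cR_scal; auto.
  - intros i.
    rewrite (RInt_extR _ (fun u => a * (Dfun u * sn i u * q1 u) + b * (Dfun u * sn i u * q2 u)))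
      by (intros; ring).
    rewrite RInt_plusR, !RInt_scalR, Hi1, Hi2. reR; ring.
    all: apply exRI; intros; try apply cR_scal; apply cR_mult; auto; apply contDsn.
Qed.

Definition sprev (i : nat) (u : R) : R := match i with 0%nat => 0 | S i' => sn i' u end.

Lemma cont_sprev i x : continuous (sprev i) x.
Proof. destruct i; simpl. apply cR_const. apply cont_sn. Qed.

Lemma sn_cos i u : sn i u * cos (PI * u) = / 2 * sn (S i) u + / 2 * sprev i u.
Proof.
  unfold sn.
  replace (om (S i) * u) with (om i * u + PI * u) by (unfold om; rewrite (S_INR (S i)); ring).
  rewrite sin_plus.
  destruct i.
  - simpl sprev. unfold om. simpl INR. rewrite Rmult_1_l.
    field.
  - simpl sprev. unfold sn.
    replace (om i * u) with (om (S i) * u - PI * u) by (unfold om; rewrite (S_INR (S i)); ring).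
    rewrite sin_minus. field.
Qed.

Lemma Qp_cos q : Qp q -> Qp (fun u => q u * cos (PI * u)).
Proof.
  intros [Hc Hi]. split.
  - intros x. apply cR_mult; auto. apply cR_der. auto_derive. auto.
  - intros i.
    rewrite (RInt_extR _ (fun u => / 2 * (Dfun u * sn (S i) u * q u) + / 2 * (Dfun u * sprev i u * q u))).
    2:{ intros. transitivity (Dfun x * q x * (sn i x * cos (PI * x))). ring.
        rewrite sn_cos. ring. }
    assert (Hp : RInt (fun u => Dfun u * sprev i u * q u) 0 1 = 0).
    { destruct i; simpl sprev.
      - rewrite (RInt_extR _ (fun _ => 0)) by (intros; ring).
        rewrite RInt_const. unfold scal; simpl; unfold mult; simpl. ring.
      - apply Hi. }
    rewrite RInt_plusR, !RInt_scalR, Hi, Hp. reR; ring.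
    all: apply exRI; intros; repeat first [apply cR_scal | apply cR_mult | apply cont_sn | apply cont_sprev | auto].
Qed.

Lemma Qp_y q : Qp q -> Qp (fun u => q u * yv u).
Proof.
  intros H. apply (Qp_ext (fun u => / 2 * q u + (- / 2) * (q u * cos (PI * u)))).
  intros; unfold yv; field.
  apply Qp_lin; auto. apply Qp_cos; auto.
Qed.

Lemma Qp_1y q : Qp q -> Qp (fun u => q u * (1 - yv u)).
Proof.
  intros H. apply (Qp_ext (fun u => / 2 * q u + (/ 2) * (q u * cos (PI * u)))).
  intros; unfold yv; field.
  apply Qp_lin; auto. apply Qp_cos; auto.
Qed.

Lemma Qp_zero : Qp (fun _ => 0).
Proof.
  apply (Qp_ext (fun u => 0 * 1 + 0 * 1)). intros; ring.
  apply Qp_lin; apply Qp_one.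
Qed.

Lemma Qp_bb n k : Qp (fun u => bb n k (yv u)).
Proof.
  revert k. induction n; intros k; destruct k; simpl.
  - apply Qp_one.
  - apply Qp_zero.
  - apply (Qp_ext (fun u => bb n 0 (yv u) * (1 - yv u))). intros; ring. apply Qp_1y, IHn.
  - apply (Qp_ext (fun u => 1 * (bb n (S k) (yv u) * (1 - yv u)) + 1 * (bb n k (yv u) * yv u))).
    intros; ring. apply Qp_lin. apply Qp_1y, IHn. apply Qp_y, IHn.
Qed.

Lemma Qp_Bp h n : Qp (fun u => Bp h n (yv u)).
Proof.
  unfold Bp. assert (forall m, Qp (fun u => sumk (fun k => h (INR k / INR n) * bb n k (yv u)) m)).
  2: apply H.
  intros m. induction m; cbn [sumk].
  - apply (Qp_ext (fun u => h (INR 0 / INR n) * bb n 0 (yv u) + 0 * 1)). intros; ring.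
    apply Qp_lin. apply Qp_bb. apply Qp_one.
  - apply (Qp_ext (fun u => 1 * sumk (fun k => h (INR k / INR n) * bb n k (yv u)) m
                            + h (INR (S m) / INR n) * bb n (S m) (yv u))). intros; ring.
    apply Qp_lin; auto. apply Qp_bb.
Qed.

End Uniq.

Lemma RInt_chasles3 (f : R -> R) a b : 0 <= a -> a <= b -> b <= 1 -> (forall x, continuous f x) ->
  RInt f 0 1 = RInt f 0 a + RInt f a b + RInt f b 1.
Proof.
  intros. 
  assert (E1 := RInt_Chasles (V:=R_CompleteNormedModule) f 0 a b (exRI _ _ _ H2) (exRI _ _ _ H2)).
  assert (E2 := RInt_Chasles (V:=R_CompleteNormedModule) f 0 b 1 (exRI _ _ _ H2) (exRI _ _ _ H2)).
  change (RInt f 0 a + RInt f a b = RInt f 0 b) in E1.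
  change (RInt f 0 b + RInt f b 1 = RInt f 0 1) in E2.
  rewrite <- E2, <- E1. reflexivity.
Qed.

Lemma int_zero (f : R -> R) : (forall x, continuous f x) -> (forall x, 0 <= x <= 1 -> 0 <= f x) ->
  RInt f 0 1 <= 0 -> forall x, 0 <= x <= 1 -> f x = 0.
Proof.
  intros Hc Hp Hi x0 Hx0.
  destruct (Req_dec (f x0) 0) as [|Hne]; auto. exfalso.
  assert (Hpos : 0 < f x0) by (specialize (Hp x0 Hx0); lra).
  destruct (cont_eps f x0 (Hc x0) (f x0 / 2) ltac:(lra)) as [d [Hd Hdd]].
  set (a := Rmax 0 (x0 - d / 2)). set (b := Rmin 1 (x0 + d / 2)).
  assert (Ha : 0 <= a <= x0) by (unfold a; apply Rmax_case_strong; lra).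
  assert (Hb : x0 <= b <= 1) by (unfold b; apply Rmin_case_strong; lra).
  assert (Hab : a < b).
  { unfold a, b. apply Rmax_case_strong; apply Rmin_case_strong; intros; lra. }
  rewrite (RInt_chasles3 f a b) in Hi by lra || auto.
  assert (0 <= RInt f 0 a) by (apply RInt_ge_0; [lra| apply exRI; auto| intros; apply Hp; lra]).
  assert (0 <= RInt f b 1) by (apply RInt_ge_0; [lra| apply exRI; auto| intros; apply Hp; lra]).
  assert (0 < RInt f a b).
  { apply RInt_gt_0; auto. intros x Hx.
    assert (Rabs (x - x0) < d).
    { assert (x0 - d / 2 <= a) by (unfold a; apply Rmax_r).
      assert (b <= x0 + d / 2) by (unfold b; apply Rmin_r).
      apply Rabs_def1; lra. }
    specialize (Hdd x H1). apply Rabs_def2 in Hdd. lra. }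
  lra.
Qed.

Theorem uniq (Dfun : R -> R) : (forall x, continuous Dfun x) ->
  (forall i, RInt (fun u => Dfun u * sn i u) 0 1 = 0) ->
  forall x, 0 <= x <= 1 -> Dfun x = 0.
Proof.
  intros HDc HD0.
  set (phi := fun u => Dfun u * sn 0 u).
  assert (Hpc : forall x, continuous phi x) by (intros; apply cR_mult; auto; apply cont_sn).
  destruct (continuity_ab_maj (fun u => Rabs (phi u)) 0 1 ltac:(lra)) as [Mx [HMx HMx']].
  { intros c _. apply continuity_pt_filterlim. apply continuous_Rabs_comp. apply Hpc. }
  set (M := Rabs (phi Mx)).
  assert (HM0 : 0 <= M) by apply Rabs_pos.
  assert (HUC := Heine phi (fun c => 0 <= c <= 1) (compact_P3 0 1)
                  ltac:(intros; apply continuity_pt_filterlim, Hpc)).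
  set (h := fun y => phi (gy y)).
  assert (Hhb : forall y, 0 <= y <= 1 -> Rabs (h y) <= M).
  { intros y Hy. apply HMx. apply gy_range. }
  assert (Hhm : forall eps, 0 < eps -> exists delta, 0 < delta /\ forall y1 y2, 0 <= y1 <= 1 -> 0 <= y2 <= 1 ->
     Rabs (y1 - y2) < delta -> Rabs (h y1 - h y2) <= eps).
  { intros eps Heps. destruct (HUC (mkposreal _ Heps)) as [dp Hdp].
    exists ((dp / 6) ^ 2). split. apply pow_lt. pose proof (cond_pos dp). lra.
    intros y1 y2 Hy1 Hy2 Hy. left. apply Hdp. apply gy_range. apply gy_range.
    pose proof (gy_mod y1 y2 Hy1 Hy2). pose proof (cond_pos dp).
    destruct (Rlt_dec (Rabs (gy y1 - gy y2)) dp) as [|Hn]; auto. exfalso.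
    apply Rnot_lt_le in Hn.
    assert (dp ^ 2 <= (gy y1 - gy y2) ^ 2).
    { rewrite <- (pow2_abs (gy y1 - gy y2)). apply pow_incr. lra. }
    assert (36 * Rabs (y1 - y2) < dp ^ 2).
    { replace (dp ^ 2) with (36 * (dp / 6) ^ 2) by field. lra. }
    lra. }
  set (I := RInt (fun u => phi u * phi u) 0 1 : R).
  assert (HI : forall eps, 0 < eps -> I <= 2 * eps * M).
  { intros eps Heps.
    destruct (bern_approx h M Hhb Hhm eps Heps) as [n [Hn Hbn]].
    destruct (Qp_Bp Dfun HDc HD0 h n) as [Hqc Hq].
    specialize (Hq 0%nat).
    assert (E : I = RInt (fun u => phi u * (phi u - Bp h n (yv u))) 0 1).
    { unfold I. rewrite (RInt_extR (fun u => phi u * (phi u - Bp h n (yv u)))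
        (fun u => phi u * phi u - Dfun u * sn 0 u * Bp h n (yv u))) by (intros; unfold phi; ring).
      rewrite RInt_minusR. fold phi in Hq. rewrite Hq. rewrite Rminus_0_r. reflexivity.
      apply exRI; intros; apply cR_mult; auto.
      apply exRI; intros; apply cR_mult; auto. }
    rewrite E. eapply Rle_trans. apply Rle_abs.
    eapply Rle_trans. apply abs_RInt_le_const with (M := M * (2 * eps)). lra.
    apply exRI; intros; apply cR_mult; auto. apply cR_minus; auto.
    intros t Ht. rewrite Rabs_mult. apply Rmult_le_compat; try apply Rabs_pos.
    apply HMx; auto.
    assert (Hht : h (yv t) = phi t) by (unfold h; rewrite gy_yv; auto).
    rewrite <- Hht, Rabs_minus_sym. apply Hbn. apply yv_range; auto.
    lra. }
  assert (HI0 : I <= 0).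
  { destruct (Rle_dec I 0) as [|Hn]; auto. exfalso. apply Rnot_le_lt in Hn.
    specialize (HI (I / (4 * (M + 1))) ltac:(apply Rdiv_lt_0_compat; lra)).
    assert (2 * (I / (4 * (M + 1))) * M < I).
    { replace (2 * (I / (4 * (M + 1))) * M) with (I * (M / (2 * (M + 1)))) by (field; lra).
      rewrite <- (Rmult_1_r I) at 2. apply Rmult_lt_compat_l; auto.
      apply (Rmult_lt_reg_r (2 * (M + 1))). lra. unfold Rdiv. rewrite Rmult_assoc, Rinv_l; lra. }
    lra. }
  assert (Hz := int_zero (fun u => phi u * phi u) ltac:(intros; apply cR_mult; auto)
                  ltac:(intros; apply Rle_0_sqr) HI0).
  assert (Hin : forall x, 0 < x < 1 -> Dfun x = 0).
  { intros x Hx. specialize (Hz x ltac:(lra)). simpl in Hz.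
    assert (phi x = 0) by nra. unfold phi, sn, om in H. simpl INR in H.
    assert (0 < sin (1 * PI * x)).
    { apply sin_gt_0; pose proof PI_RGT_0; nra. }
    nra. }
  intros x Hx.
  destruct (Rle_lt_or_eq_dec 0 x (proj1 Hx)) as [Hx0|Hx0];
  [destruct (Rle_lt_or_eq_dec x 1 (proj2 Hx)) as [Hx1|Hx1]|].
  - apply Hin; lra.
  - subst x. destruct (Req_dec (Dfun 1) 0) as [|Hne]; auto. exfalso.
    destruct (cont_eps Dfun 1 (HDc 1) (Rabs (Dfun 1)) (Rabs_pos_lt _ Hne)) as [d [Hd Hdd]].
    set (t := Rmax (1 - d / 2) (1 / 2)).
    assert (1/2 <= t < 1) by (unfold t; apply Rmax_case_strong; lra).
    assert (t - 1 >= - (d / 2)) by (unfold t; apply Rmax_case_strong; lra).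
    specialize (Hdd t ltac:(apply Rabs_def1; lra)). rewrite Hin in Hdd by lra.
    rewrite Rminus_0_l, Rabs_Ropp in Hdd. lra.
  - subst x. destruct (Req_dec (Dfun 0) 0) as [|Hne]; auto. exfalso.
    destruct (cont_eps Dfun 0 (HDc 0) (Rabs (Dfun 0)) (Rabs_pos_lt _ Hne)) as [d [Hd Hdd]].
    set (t := Rmin (d / 2) (1 / 2)).
    assert (0 < t <= 1/2) by (unfold t; apply Rmin_case_strong; lra).
    assert (t <= d / 2) by (unfold t; apply Rmin_l).
    specialize (Hdd t ltac:(apply Rabs_def1; lra)). rewrite Hin in Hdd by lra.
    rewrite Rminus_0_l, Rabs_Ropp in Hdd. lra.
Qed.

Lemma eps_cont (f : R -> R) x :
  (forall eps, 0 < eps -> exists delta, 0 < delta /\ forall y, Rabs (y - x) < delta -> Rabs (f y - f x) < eps) ->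
  continuous f x.
Proof.
  intros H. apply continuity_pt_filterlim. apply continuity_pt_locally.
  intros eps. destruct (H eps (cond_pos eps)) as [d [Hd Hdd]].
  exists (mkposreal d Hd). intros y Hy. apply Hdd. exact Hy.
Qed.

Definition clamp (x : R) : R := Rmin 1 (Rmax 0 x).

Lemma clamp_range x : 0 <= clamp x <= 1.
Proof. unfold clamp. apply Rmin_case_strong; apply Rmax_case_strong; intros; lra. Qed.
Lemma clamp_id x : 0 <= x <= 1 -> clamp x = x.
Proof. intros. unfold clamp. rewrite Rmax_right by lra. rewrite Rmin_right; lra. Qed.
Ltac absd := unfold Rabs; repeat match goal with |- context [Rcase_abs ?a] => destruct (Rcase_abs a) end.
Lemma max_lip x y : Rabs (Rmax 0 y - Rmax 0 x) <= Rabs (y - x).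
Proof.
  apply Rmax_case_strong; apply Rmax_case_strong; intros; absd; lra.
Qed.
Lemma min_lip x y : Rabs (Rmin 1 y - Rmin 1 x) <= Rabs (y - x).
Proof.
  apply Rmin_case_strong; apply Rmin_case_strong; intros; absd; lra.
Qed.

Lemma clamp_lip x y : Rabs (clamp y - clamp x) <= Rabs (y - x).
Proof. unfold clamp. eapply Rle_trans. apply min_lip. apply max_lip. Qed.

Lemma Gc_cont G x : cont_on_01 G -> continuous (fun u => G (clamp u)) x.
Proof.
  intros HG. apply eps_cont. intros eps He.
  destruct (HG (clamp x) (clamp_range x) eps He) as [d [Hd Hdd]].
  exists d. split; auto. intros y Hy. apply Hdd. apply clamp_range.
  eapply Rle_lt_trans. apply clamp_lip. auto.
Qed.

Lemma Series_zero (a : nat -> R) : (forall k, a k = 0) -> Series a = 0.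
Proof.
  intros H. unfold Series.
  rewrite (Lim_seq_ext _ (fun _ => 0)). rewrite Lim_seq_const. reflexivity.
  intros n. induction n. rewrite sum_O; auto. rewrite sum_Sn, IHn, H. unfold plus; simpl. ring.
Qed.

Section Conn.
Variables (alpha : R) (G : R -> R).
Hypothesis Ha : 0 < alpha.
Hypothesis HGc : cont_on_01 G.
Hypothesis HGS : in_S alpha G.

Definition cG (k : nat) : R := coef G (S k).

Lemma MbG j : (j <= 3)%nat -> ex_series (Mb cG j).
Proof. intros Hj. apply Mb_series; [apply (decay alpha G Ha HGS) | exact Hj]. Qed.

Lemma G_eq_S : forall x, 0 <= x <= 1 -> G x = Sf cG 0 x.
Proof.
  intros x Hx.
  set (Dfun := fun u => G (clamp u) - Sf cG 0 u).
  assert (HDc : forall x, continuous Dfun x).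
  { intros; apply cR_minus. apply Gc_cont; auto. apply Sf_cont; apply MbG; lia. }
  assert (HD0 : forall i, RInt (fun u => Dfun u * sn i u) 0 1 = 0).
  { intros i.
    assert (E1 : RInt (fun u => Sf cG 0 u * psi (S i) u) 0 1 = cG i) by (apply coef_Sf; apply MbG; lia).
    assert (E2 : cG i = RInt (fun u => G (clamp u) * psi (S i) u) 0 1).
    { unfold cG, coef. apply RInt_extR. intros y Hy. rewrite Rmin_left, Rmax_right in Hy by lra.
      rewrite clamp_id by lra. auto. }
    assert (Hs : forall f, (forall x, continuous f x) -> RInt (fun u => f u * psi (S i) u) 0 1 = sqrt 2 * RInt (fun u => f u * sn i u) 0 1).
    { intros f Hf. rewrite <- RInt_scalR. apply RInt_extR. intros; unfold psi, sn, om. ring.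
      apply exRI. intros; apply cR_mult; auto; apply cont_sn. }
    rewrite Hs in E1 by (intros; apply Sf_cont; apply MbG; lia).
    rewrite Hs in E2 by (intros; apply Gc_cont; auto).
    assert (Hsq : 0 < sqrt 2) by (apply sqrt_lt_R0; lra).
    unfold Dfun.
    rewrite (RInt_extR _ (fun u => G (clamp u) * sn i u - Sf cG 0 u * sn i u)) by (intros; ring).
    rewrite RInt_minusR.
    apply (Rmult_eq_reg_l (sqrt 2)); [|lra]. rewrite Rmult_0_r, Rmult_minus_distr_l.
    rewrite <- E1 in E2. rewrite <- E2. ring.
    apply exRI. intros; apply cR_mult; [apply Gc_cont; auto| apply cont_sn].
    apply exRI. intros; apply cR_mult; [apply Sf_cont; apply MbG; lia| apply cont_sn]. }
  pose proof (uniq Dfun HDc HD0 x Hx). unfold Dfun in H. rewrite clamp_id in H by auto. lra.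
Qed.

Lemma Sf_zero c j u : (forall k, sin (om k * u + INR j * (PI / 2)) = 0) -> Sf c j u = 0.
Proof. intros H. unfold Sf, trm. apply Series_zero. intros k; rewrite H; ring. Qed.

Lemma Sf0_0 : Sf cG 0 0 = 0.
Proof. apply Sf_zero. intros k. simpl INR. replace (om k * 0 + 0 * (PI / 2)) with 0 by ring. apply sin_0. Qed.
Lemma Sf0_1 : Sf cG 0 1 = 0.
Proof. apply Sf_zero. intros k. simpl (INR 0). replace (om k * 1 + 0 * (PI / 2)) with (INR (S k) * PI) by (unfold om; ring). apply sin_nPI. Qed.
Lemma Sf2_0 : Sf cG 2 0 = 0.
Proof. apply Sf_zero. intros k. replace (om k * 0 + INR 2 * (PI / 2)) with PI by (simpl; field). apply sin_PI. Qed.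
Lemma Sf2_1 : Sf cG 2 1 = 0.
Proof. apply Sf_zero. intros k. replace (om k * 1 + INR 2 * (PI / 2)) with (INR (S k) * PI + PI) by (unfold om; simpl; field).
  rewrite neg_sin, sin_nPI. ring. Qed.

Lemma G0 : G 0 = 0.
Proof. rewrite G_eq_S by lra. apply Sf0_0. Qed.
Lemma G1 : G 1 = 0.
Proof. rewrite G_eq_S by lra. apply Sf0_1. Qed.

Lemma D2 u : 0 < u < 1 -> Derive_n G 2 u = Sf cG 2 u.
Proof.
  intros Hu.
  rewrite (Derive_n_ext_loc G (Sf cG 0)).
  2:{ assert (He : 0 < Rmin u (1 - u)) by (apply Rmin_case; lra).
      exists (mkposreal _ He). intros y Hy. apply G_eq_S.
      assert (Hy' : Rabs (y - u) < Rmin u (1 - u)) by exact Hy.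
      pose proof (Rmin_l u (1 - u)). pose proof (Rmin_r u (1 - u)).
      apply Rabs_def2 in Hy'. lra. }
  simpl. rewrite (Derive_ext _ (Sf cG 1)).
  apply is_derive_unique, Sf_derive; apply MbG; lia.
  intros t. apply is_derive_unique, Sf_derive; apply MbG; lia.
Qed.

Lemma lim_cont (f : R -> R) (un : nat -> R) l : continuous f l -> is_lim_seq un l ->
  is_lim_seq (fun n => f (un n)) (f l).
Proof.
  intros Hf Hu. eapply filterlim_comp. exact Hu. exact Hf.
Qed.

Lemma inv_lim : is_lim_seq (fun n => / (INR n + 2)) 0.
Proof.
  replace (Finite 0) with (Rbar_inv p_infty) by reflexivity.
  apply is_lim_seq_inv. 
  apply (is_lim_seq_plus _ _ p_infty 2). apply is_lim_seq_INR. apply is_lim_seq_const.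
  reflexivity. discriminate.
Qed.

Lemma inv_range n : 0 < / (INR n + 2) < 1.
Proof.
  pose proof (pos_INR n). split. apply Rinv_0_lt_compat; lra.
  rewrite <- Rinv_1. apply Rinv_lt_contravar; lra.
Qed.

Lemma SD u : 0 <= u <= 1 -> second_deriv01 G u = Sf cG 2 u.
Proof.
  intros Hu. unfold second_deriv01.
  assert (Hc : continuous (Sf cG 2) 0 /\ continuous (Sf cG 2) 1).
  { split; apply Sf_cont; apply MbG; lia. }
  destruct (Rlt_dec 0 u) as [Hu0|Hu0].
  - destruct (Rlt_dec u 1) as [Hu1|Hu1]. apply D2; lra.
    assert (u = 1) by lra. subst u. rewrite Sf2_1.
    rewrite (Lim_seq_ext _ (fun n => Sf cG 2 (1 - / (INR n + 2)))).
    2:{ intros m. apply D2. pose proof (inv_range m). lra. }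
    rewrite (is_lim_seq_unique _ (Sf cG 2 1)). rewrite Sf2_1; reflexivity.
    apply lim_cont. apply Hc.
    replace (Finite 1) with (Rbar_minus 1 0) by (simpl; f_equal; ring).
    apply is_lim_seq_minus'. apply is_lim_seq_const. apply inv_lim.
  - assert (u = 0) by lra. subst u. rewrite Sf2_0.
    rewrite (Lim_seq_ext _ (fun n => Sf cG 2 (/ (INR n + 2)))).
    2:{ intros m. apply D2. pose proof (inv_range m). lra. }
    rewrite (is_lim_seq_unique _ (Sf cG 2 0)). rewrite Sf2_0; reflexivity.
    apply lim_cont. apply Hc. apply inv_lim.
Qed.

End Conn.

Lemma lip (f df : R -> R) a b K : a <= b ->
  (forall t, a <= t <= b -> is_derive f t (df t)) ->
  (forall t, a <= t <= b -> Rabs (df t) <= K) ->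
  Rabs (f b - f a) <= K * (b - a).
Proof.
  intros Hab Hd Hb.
  destruct (MVT_gen f a b df) as [c [Hc E]].
  - intros x Hx. apply Hd. rewrite Rmin_left, Rmax_right in Hx by lra. lra.
  - intros x Hx. rewrite Rmin_left, Rmax_right in Hx by lra.
    apply continuity_pt_filterlim. apply cR_der. eexists; apply Hd; lra.
  - rewrite Rmin_left, Rmax_right in Hc by lra. rewrite E, Rabs_mult, (Rabs_right (b - a)) by lra.
    apply Rmult_le_compat_r. lra. apply Hb; lra.
Qed.

Lemma is_derive_shift (f df : R -> R) x s c :
  (forall t, is_derive f t (df t)) -> is_derive (fun t => f (x + s * t)) c (s * df (x + s * c)).
Proof.
  intros H.
  apply (is_derive_comp f (fun t => x + s * t) c (df (x + s * c)) s). apply H.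
  auto_derive; auto. ring.
Qed.

Lemma dR_plus (f g : R -> R) x df dg : is_derive f x df -> is_derive g x dg -> is_derive (fun t => f t + g t) x (df + dg).
Proof. intros. apply (is_derive_plus (K:=R_AbsRing) (V:=R_NormedModule) f g); auto. Qed.
Lemma dR_minus (f g : R -> R) x df dg : is_derive f x df -> is_derive g x dg -> is_derive (fun t => f t - g t) x (df - dg).
Proof. intros. apply (is_derive_minus (K:=R_AbsRing) (V:=R_NormedModule) f g); auto. Qed.
Lemma dR_scal (f : R -> R) a x df : is_derive f x df -> is_derive (fun t => a * f t) x (a * df).
Proof. intros. apply (is_derive_scal f); auto. Qed.
Lemma dR_const (a : R) x : is_derive (fun _ => a) x 0.
Proof. apply (is_derive_const (K:=R_AbsRing) (V:=R_NormedModule)). Qed.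
Lemma dR_ext (f g : R -> R) x df dg : (forall t, f t = g t) -> df = dg -> is_derive f x df -> is_derive g x dg.
Proof. intros E1 E2 H. subst. eapply is_derive_ext; eauto. Qed.
Lemma dR_sq x a : is_derive (fun t => t ^ 2 * a) x (2 * x * a).
Proof. auto_derive; auto. ring. Qed.

Section Stencil.
Variables F F1 F2 F3 : R -> R.
Variable M3 : R.
Hypothesis dF : forall t, is_derive F t (F1 t).
Hypothesis dF1 : forall t, is_derive F1 t (F2 t).
Hypothesis dF2 : forall t, is_derive F2 t (F3 t).
Hypothesis bF3 : forall t, Rabs (F3 t) <= M3.

Lemma stencil x h : 0 <= h ->
  Rabs (F (x + h) - 2 * F x + F (x - h) - h ^ 2 * F2 x) <= 2 * M3 * h ^ 3.
Proof.
  intros Hh.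
  set (phi := fun t => F (x + 1 * t) + F (x + (-1) * t) - 2 * F x - t ^ 2 * F2 x).
  set (phi1 := fun t => F1 (x + 1 * t) - F1 (x + (-1) * t) - 2 * t * F2 x).
  set (phi2 := fun t => F2 (x + 1 * t) + F2 (x + (-1) * t) - 2 * F2 x).
  assert (Hd1 : forall t, is_derive phi t (phi1 t)).
  { intros t. unfold phi, phi1.
    eapply dR_ext; [intros; reflexivity| |].
    2: apply dR_minus; [apply dR_minus; [apply dR_plus; apply is_derive_shift; exact dF| apply dR_const]| apply dR_sq].
    simpl. ring. }
  assert (Hd2 : forall t, is_derive phi1 t (phi2 t)).
  { intros t.
    assert (L : is_derive (fun t => 2 * F2 x * t) t (2 * F2 x * 1)).
    { apply dR_scal. apply (is_derive_id (K:=R_AbsRing)). }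
    assert (K := dR_minus _ _ t _ _ (dR_minus _ _ t _ _ (is_derive_shift F1 F2 x 1 t dF1)
                  (is_derive_shift F1 F2 x (-1) t dF1)) L).
    eapply dR_ext; [| |exact K].
    intros; unfold phi1; reR; ring. unfold phi2; reR; ring. }
  assert (HM3 : 0 <= M3) by (pose proof (bF3 0); pose proof (Rabs_pos (F3 0)); lra).
  assert (Hb2 : forall t, 0 <= t <= h -> Rabs (phi2 t) <= 2 * M3 * h).
  { intros t Ht. unfold phi2.
    assert (A1 : Rabs (F2 (x + 1 * t) - F2 x) <= M3 * (x + 1 * t - x)).
    { apply (lip F2 F3); try lra. intros; apply dF2. intros; apply bF3. }
    assert (A2 : Rabs (F2 x - F2 (x + (-1) * t)) <= M3 * (x - (x + (-1) * t))).
    { apply (lip F2 F3); try lra. intros; apply dF2. intros; apply bF3. }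
    replace (F2 (x + 1 * t) + F2 (x + -1 * t) - 2 * F2 x) with
      ((F2 (x + 1 * t) - F2 x) - (F2 x - F2 (x + (-1) * t))) by ring.
    eapply Rle_trans. apply Rabs_triang. rewrite Rabs_Ropp.
    assert (M3 * t <= M3 * h) by (apply Rmult_le_compat_l; lra).
    replace (x + 1 * t - x) with t in A1 by ring.
    replace (x - (x + -1 * t)) with t in A2 by ring. lra. }
  assert (Hb1 : forall t, 0 <= t <= h -> Rabs (phi1 t) <= 2 * M3 * h ^ 2).
  { intros t Ht.
    assert (A := lip phi1 phi2 0 t (2 * M3 * h) ltac:(lra) ltac:(intros; apply Hd2)
                  ltac:(intros; apply Hb2; lra)).
    assert (E : phi1 0 = 0) by (unfold phi1; rewrite !Rmult_0_r, !Rplus_0_r; ring).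
    rewrite E, Rminus_0_r, Rminus_0_r in A.
    assert (2 * M3 * h * t <= 2 * M3 * h * h) by (apply Rmult_le_compat_l; nra).
    simpl. lra. }
  assert (A := lip phi phi1 0 h (2 * M3 * h ^ 2) Hh ltac:(intros; apply Hd1) Hb1).
  assert (E : phi 0 = 0) by (unfold phi; rewrite !Rmult_0_r, !Rplus_0_r; simpl; ring).
  rewrite E, !Rminus_0_r in A.
  replace (F (x + h) - 2 * F x + F (x - h) - h ^ 2 * F2 x) with (phi h) by (unfold phi; replace (x + 1 * h) with (x + h) by ring; replace (x + -1 * h) with (x - h) by ring; ring).
  simpl in *. lra.
Qed.
End Stencil.

Lemma INR_ge4 N : (4 <= N)%nat -> 4 <= INR N.
Proof. intros H. apply le_INR in H. simpl in H. lra. Qed.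

Lemma pq_alg (n Rb cL cR M1 a b : R) : 4 <= n -> 0 < Rb <= n -> 0 <= cL -> 0 <= cR -> 0 <= M1 ->
  Rabs a <= M1 / n -> Rabs b <= M1 / n ->
  Rabs (cL * Rb * (a + ((cR * Rb - 1) * b - (cL * Rb - 1) * a) / (n - 2 + cR * Rb + cL * Rb))
        - a - ((cR * Rb - 1) * b - (cL * Rb - 1) * a) / (n - 2 + cR * Rb + cL * Rb))
  + n * Rabs (((cR * Rb - 1) * b - (cL * Rb - 1) * a) / (n - 2 + cR * Rb + cL * Rb))
  <= ((cL + 1) * (M1 + 2 * (2 * M1 * (cL + cR + 2))) + 2 * M1 * (cL + cR + 2)) * ((Rb + 1) / n).
Proof.
  intros Hn HR HcL HcR HM Ha Hb.
  set (C1 := 2 * M1 * (cL + cR + 2)).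
  set (D := n - 2 + cR * Rb + cL * Rb).
  set (q := ((cR * Rb - 1) * b - (cL * Rb - 1) * a) / D).
  set (e := (Rb + 1) / n).
  assert (HD : n / 2 <= D). { unfold D. assert (0 <= cR * Rb) by nra. assert (0 <= cL * Rb) by nra. lra. }
  assert (Hn0 : 0 < n) by lra.
  assert (He : 0 <= e <= 2).
  { unfold e. split. apply Rmult_le_pos; [lra| left; apply Rinv_0_lt_compat; lra].
    apply (Rmult_le_reg_r n); auto. unfold Rdiv. rewrite Rmult_assoc, Rinv_l by lra. lra. }
  assert (Hnum : Rabs ((cR * Rb - 1) * b - (cL * Rb - 1) * a) <= (cL + cR + 2) * (Rb + 1) * (M1 / n)).
  { eapply Rle_trans. apply Rabs_triang. rewrite Rabs_Ropp, !Rabs_mult.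
    assert (Rabs (cR * Rb - 1) <= cR * Rb + 1) by (apply Rabs_le; nra).
    assert (Rabs (cL * Rb - 1) <= cL * Rb + 1) by (apply Rabs_le; nra).
    assert (0 <= M1 / n) by (apply Rmult_le_pos; [lra| left; apply Rinv_0_lt_compat; lra]).
    assert (Rabs (cR * Rb - 1) * Rabs b <= (cR * Rb + 1) * (M1 / n)) by (apply Rmult_le_compat; auto; apply Rabs_pos).
    assert (Rabs (cL * Rb - 1) * Rabs a <= (cL * Rb + 1) * (M1 / n)) by (apply Rmult_le_compat; auto; apply Rabs_pos).
    assert ((cR * Rb + 1) + (cL * Rb + 1) <= (cL + cR + 2) * (Rb + 1)) by nra.
    nra. }
  assert (Hq : n * Rabs q <= C1 * e).
  { unfold q. unfold Rdiv at 1. rewrite Rabs_mult, Rabs_Rinv by lra. rewrite (Rabs_right D) by lra.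
    apply (Rmult_le_reg_r D). lra.
    replace (n * (Rabs ((cR * Rb - 1) * b - (cL * Rb - 1) * a) * / D) * D)
      with (n * Rabs ((cR * Rb - 1) * b - (cL * Rb - 1) * a)) by (field; lra).
    eapply Rle_trans. apply Rmult_le_compat_l. lra. exact Hnum.
    unfold C1, e.
    replace (n * ((cL + cR + 2) * (Rb + 1) * (M1 / n))) with ((cL + cR + 2) * (Rb + 1) * M1) by (field; lra).
    replace (2 * M1 * (cL + cR + 2) * ((Rb + 1) / n) * D) with ((cL + cR + 2) * (Rb + 1) * M1 * (2 * D / n)) by (field; lra).
    rewrite <- (Rmult_1_r ((cL + cR + 2) * (Rb + 1) * M1)) at 1.
    apply Rmult_le_compat_l. apply Rmult_le_pos; [|lra]. apply Rmult_le_pos; lra.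
    apply (Rmult_le_reg_r n); auto. unfold Rdiv. rewrite Rmult_assoc, Rinv_l by lra. lra. }
  assert (Hq' : Rabs q <= C1 * e / n).
  { apply (Rmult_le_reg_l n); auto. replace (n * (C1 * e / n)) with (C1 * e) by (field; lra). auto. }
  assert (Hp : Rabs (cL * Rb * (a + q) - a - q) <= (cL + 1) * e * (M1 + C1 * e)).
  { replace (cL * Rb * (a + q) - a - q) with ((cL * Rb - 1) * (a + q)) by ring.
    rewrite Rabs_mult.
    assert (Rabs (cL * Rb - 1) <= (cL + 1) * (Rb + 1)) by (apply Rabs_le; nra).
    assert (Rabs (a + q) <= M1 / n + C1 * e / n) by (eapply Rle_trans; [apply Rabs_triang| lra]).
    eapply Rle_trans. apply Rmult_le_compat; try apply Rabs_pos; eauto.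
    unfold e. right. field. lra. }
  assert (0 <= C1) by (unfold C1; nra).
  assert ((cL + 1) * e * (M1 + C1 * e) <= (cL + 1) * e * (M1 + 2 * C1)).
  { apply Rmult_le_compat_l. nra. nra. }
  fold D. fold q. nra.
Qed.

Section Disc.
Variables (alpha alphaL alphaR beta : R).
Hypothesis Ha : 0 < alpha.
Hypothesis HaL : 0 < alphaL.
Hypothesis HaR : 0 < alphaR.
Hypothesis Hb : 0 <= beta < 1.
Variables F F1 F2 F3 : R -> R.
Variables M1 M3 : R.
Hypothesis dF : forall t, is_derive F t (F1 t).
Hypothesis dF1 : forall t, is_derive F1 t (F2 t).
Hypothesis dF2 : forall t, is_derive F2 t (F3 t).
Hypothesis bF1 : forall t, Rabs (F1 t) <= M1.
Hypothesis bF3 : forall t, Rabs (F3 t) <= M3.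
Hypothesis F_0 : F 0 = 0.
Hypothesis F_1 : F 1 = 0.
Hypothesis F2_0 : F2 0 = 0.
Hypothesis F2_1 : F2 1 = 0.

Definition KK (N : nat) := INR N ^ 2 * alpha.
Definition LL (N : nat) := Rpower (INR N) (2 - beta).
Definition rhoL (N : nat) := KK N / (LL N * alphaL).
Definition rhoR (N : nat) := KK N / (LL N * alphaR).
Definition aN (N : nat) := F (INR 1 / INR N).
Definition bN (N : nat) := F (INR (N - 1) / INR N).
Definition qN (N : nat) := ((rhoR N - 1) * bN N - (rhoL N - 1) * aN N) / (INR N - 2 + rhoR N + rhoL N).
Definition pN (N : nat) := rhoL N * (aN N + qN N) - aN N - qN N.
Definition GN (N x : nat) : R :=
  if ((x =? 0)%nat || (N <=? x)%nat)%bool then 0 else F (INR x / INR N) + pN N + qN N * INR x.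

Lemma LL_pos N : 0 < LL N.
Proof. unfold LL, Rpower. apply exp_pos. Qed.

Lemma rho_eq N c : (0 < N)%nat -> 0 < c -> KK N / (LL N * c) = alpha / c * Rpower (INR N) beta.
Proof.
  intros HN Hc. assert (0 < INR N) by (apply lt_0_INR; auto).
  unfold KK, LL. replace (2 - beta) with (INR 2 + - beta) by (simpl; ring).
  rewrite Rpower_plus, Rpower_Ropp, Rpower_pow by auto.
  assert (0 < Rpower (INR N) beta) by (unfold Rpower; apply exp_pos).
  field. split; lra.
Qed.

Lemma rhoL_nn N : 0 <= rhoL N.
Proof. unfold rhoL, KK. apply Rmult_le_pos. apply Rmult_le_pos. apply pow2_ge_0. lra.
  left; apply Rinv_0_lt_compat, Rmult_lt_0_compat; [apply LL_pos|lra]. Qed.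
Lemma rhoR_nn N : 0 <= rhoR N.
Proof. unfold rhoR, KK. apply Rmult_le_pos. apply Rmult_le_pos. apply pow2_ge_0. lra.
  left; apply Rinv_0_lt_compat, Rmult_lt_0_compat; [apply LL_pos|lra]. Qed.

Lemma Dpos N : (4 <= N)%nat -> INR N / 2 <= INR N - 2 + rhoR N + rhoL N.
Proof. intros. pose proof (rhoL_nn N). pose proof (rhoR_nn N).
  pose proof (INR_ge4 N H). lra. Qed.

Lemma E1 N : (4 <= N)%nat -> LL N * alphaL * (aN N + pN N + qN N) = KK N * (aN N + qN N).
Proof.
  intros. unfold pN, rhoL. pose proof (LL_pos N). field. lra.
Qed.

Lemma E2 N : (4 <= N)%nat ->
  LL N * alphaR * (bN N + pN N + qN N * (INR N - 1)) = KK N * (bN N - qN N).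
Proof.
  intros HN. pose proof (Dpos N HN). pose proof (LL_pos N).
  assert (0 < INR N) by (apply lt_0_INR; lia).
  assert (HD : INR N - 2 + rhoR N + rhoL N <> 0) by lra.
  assert (Hq : qN N * (INR N - 2 + rhoR N + rhoL N) = (rhoR N - 1) * bN N - (rhoL N - 1) * aN N).
  { unfold qN. field. auto. }
  assert (Hw : bN N + pN N + qN N * (INR N - 1) = rhoR N * (bN N - qN N)).
  { unfold pN. apply (Rplus_eq_reg_r 0). nra. }
  rewrite Hw. unfold rhoR. field. lra.
Qed.

Ltac bsimp := repeat match goal with
  | |- context [ (?a <=? ?b)%nat ] => destruct (Nat.leb_spec a b); try (exfalso; lia)
  | |- context [ (?a <? ?b)%nat ] => destruct (Nat.ltb_spec a b); try (exfalso; lia)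
  | |- context [ (?a =? ?b)%nat ] => destruct (Nat.eqb_spec a b); try (exfalso; lia)
  end; simpl andb; simpl orb.

Lemma gen_eq N x : (4 <= N)%nat -> (1 <= x <= N - 1)%nat ->
  genA alpha alphaL alphaR beta N (GN N) x =
  KK N * (F (INR (x - 1) / INR N) - 2 * F (INR x / INR N) + F (INR (x + 1) / INR N)).
Proof.
  intros HN Hx. pose proof (E1 N HN) as HE1. pose proof (E2 N HN) as HE2.
  assert (HN0 : 0 < INR N) by (apply lt_0_INR; lia).
  unfold genA, GN. fold (KK N). fold (LL N).
  bsimp.
  all: cbv iota.
  -
    rewrite e. replace (N - 1 - 1)%nat with (N - 2)%nat by lia.
    replace (N - 1 + 1)%nat with N by lia.
    assert (HN1 : INR (N - 1) = INR N - 1) by (rewrite minus_INR by lia; simpl; ring).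
    assert (HN2 : INR (N - 2) = INR N - 2) by (rewrite minus_INR by lia; simpl; ring).
    replace (INR N / INR N) with 1 by (field; lra). rewrite F_1.
    unfold bN in HE2. rewrite HN1, HN2 in *.
    replace (LL N * alphaR * (0 - (F ((INR N - 1) / INR N) + pN N + qN N * (INR N - 1))))
      with (- (LL N * alphaR * (F ((INR N - 1) / INR N) + pN N + qN N * (INR N - 1)))) by ring.
    rewrite HE2. ring.
  -
    rewrite minus_INR, plus_INR by lia. change (INR 1) with 1. ring.
  -
    rewrite e. change (INR (1 - 1)) with 0. change (1 + 1)%nat with 2%nat.
    replace (0 / INR N) with 0 by (unfold Rdiv; ring). rewrite F_0.
    change (INR 0) with 0.
    unfold aN in HE1. rewrite (S_INR 1). change (INR 1) with 1 in *.
    replace (LL N * alphaL * (0 - (F (1 / INR N) + pN N + qN N * 1)))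
      with (- (LL N * alphaL * (F (1 / INR N) + pN N + qN N))) by ring.
    rewrite HE1. ring.
Qed.

Lemma M3_nn : 0 <= M3.
Proof. pose proof (bF3 0). pose proof (Rabs_pos (F3 0)). lra. Qed.
Lemma M1_nn : 0 <= M1.
Proof. pose proof (bF1 0). pose proof (Rabs_pos (F1 0)). lra. Qed.

Lemma gen_est N x : (4 <= N)%nat -> (x <= N)%nat ->
  Rabs (genA alpha alphaL alphaR beta N (GN N) x - alpha * F2 (INR x / INR N)) <= 2 * alpha * M3 / INR N.
Proof.
  intros HN Hx. pose proof M3_nn.
  assert (HN0 : 0 < INR N) by (apply lt_0_INR; lia).
  assert (0 <= 2 * alpha * M3 / INR N).
  { apply Rmult_le_pos. apply Rmult_le_pos; lra. left; apply Rinv_0_lt_compat; lra. }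
  destruct (Nat.eq_dec x 0) as [->|Hx0].
  - unfold genA. simpl andb. cbv iota. change (INR 0) with 0.
    replace (0 / INR N) with 0 by (unfold Rdiv; ring). rewrite F2_0.
    replace (0 - alpha * 0) with 0 by ring. rewrite Rabs_R0. auto.
  - destruct (Nat.eq_dec x N) as [->|HxN].
    + unfold genA. destruct (Nat.ltb_spec N N); try lia. rewrite Bool.andb_false_r. cbv iota.
      replace (INR N / INR N) with 1 by (field; lra). rewrite F2_1.
      replace (0 - alpha * 0) with 0 by ring. rewrite Rabs_R0. auto.
    + rewrite gen_eq by lia.
      set (X := INR x / INR N). set (h := / INR N).
      assert (E1' : INR (x - 1) / INR N = X - h) by (unfold X, h; rewrite minus_INR by lia; simpl; field; lra).
      assert (E2' : INR (x + 1) / INR N = X + h) by (unfold X, h; rewrite plus_INR; simpl; field; lra).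
      rewrite E1', E2'.
      assert (Hh : 0 <= h) by (left; apply Rinv_0_lt_compat; lra).
      pose proof (stencil F F1 F2 F3 M3 dF dF1 dF2 bF3 X h Hh) as St.
      replace (KK N * (F (X - h) - 2 * F X + F (X + h)) - alpha * F2 X)
        with ((alpha * INR N ^ 2) * (F (X + h) - 2 * F X + F (X - h) - h ^ 2 * F2 X)).
      2:{ unfold KK, h. field. lra. }
      rewrite Rabs_mult, Rabs_right by (apply Rle_ge, Rmult_le_pos; [lra|apply pow2_ge_0]).
      eapply Rle_trans. apply Rmult_le_compat_l. apply Rmult_le_pos; [lra|apply pow2_ge_0]. exact St.
      unfold h. right. field. lra.
Qed.

Lemma approx_est N x : (4 <= N)%nat -> (x <= N)%nat ->
  Rabs (GN N x - F (INR x / INR N)) <= Rabs (pN N) + INR N * Rabs (qN N).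
Proof.
  intros HN Hx.
  assert (HN0 : 0 < INR N) by (apply lt_0_INR; lia).
  assert (0 <= Rabs (pN N) + INR N * Rabs (qN N)).
  { pose proof (Rabs_pos (pN N)). pose proof (Rabs_pos (qN N)). nra. }
  destruct (Nat.eq_dec x 0) as [->|Hx0]; [|destruct (Nat.eq_dec x N) as [->|HxN]].
  - unfold GN. bsimp; cbv iota. change (INR 0) with 0. replace (0 / INR N) with 0 by (unfold Rdiv; ring).
    rewrite F_0, Rminus_0_r, Rabs_R0. auto.
  - unfold GN. bsimp; cbv iota. replace (INR N / INR N) with 1 by (field; lra).
    rewrite F_1, Rminus_0_r, Rabs_R0. auto.
  - unfold GN. bsimp; cbv iota.
    replace (F (INR x / INR N) + pN N + qN N * INR x - F (INR x / INR N)) with (pN N + qN N * INR x) by ring.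
    eapply Rle_trans. apply Rabs_triang. rewrite Rabs_mult, (Rabs_right (INR x)) by (apply Rle_ge, pos_INR).
    apply Rplus_le_compat_l. rewrite (Rmult_comm (INR N)). apply Rmult_le_compat_l. apply Rabs_pos.
    apply le_INR; lia.
Qed.

Definition eN (N : nat) := (Rpower (INR N) beta + 1) / INR N.
Definition Cpq := ((alpha / alphaL + 1) * (M1 + 2 * (2 * M1 * (alpha / alphaL + alpha / alphaR + 2)))
                   + 2 * M1 * (alpha / alphaL + alpha / alphaR + 2)).

Lemma pq_bound N : (4 <= N)%nat -> Rabs (pN N) + INR N * Rabs (qN N) <= Cpq * eN N.
Proof.
  intros HN. pose proof (INR_ge4 N HN). pose proof M1_nn.
  assert (HN0 : 0 < INR N) by lra.
  assert (HRb : 0 < Rpower (INR N) beta <= INR N).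
  { split. unfold Rpower; apply exp_pos.
    rewrite <- (Rpower_1 (INR N)) at 2 by lra. apply Rle_Rpower; lra. }
  assert (Ha1 : Rabs (aN N) <= M1 / INR N).
  { unfold aN. change (INR 1) with 1.
    replace (F (1 / INR N)) with (F (1 / INR N) - F 0) by (rewrite F_0; ring).
    replace (M1 / INR N) with (M1 * (1 / INR N - 0)) by (field; lra).
    apply (lip F F1). left; apply Rdiv_lt_0_compat; lra. intros; apply dF. intros; apply bF1. }
  assert (Hb1 : Rabs (bN N) <= M1 / INR N).
  { unfold bN. rewrite minus_INR by lia. change (INR 1) with 1.
    replace (F ((INR N - 1) / INR N)) with (- (F 1 - F ((INR N - 1) / INR N))) by (rewrite F_1; ring).
    rewrite Rabs_Ropp.
    replace (M1 / INR N) with (M1 * (1 - (INR N - 1) / INR N)) by (field; lra).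
    apply (lip F F1). apply (Rmult_le_reg_r (INR N)); auto. unfold Rdiv. rewrite Rmult_assoc, Rinv_l by lra. lra.
    intros; apply dF. intros; apply bF1. }
  unfold pN, qN, rhoL, rhoR. rewrite (rho_eq N alphaR), (rho_eq N alphaL) by (lia || lra).
  unfold Cpq, eN.
  apply pq_alg; auto; try lra.
  apply Rmult_le_pos; [lra| left; apply Rinv_0_lt_compat; lra].
  apply Rmult_le_pos; [lra| left; apply Rinv_0_lt_compat; lra].
Qed.
End Disc.

Lemma rpow_lim e : e < 0 -> is_lim_seq (fun N => Rpower (INR N) e) 0.
Proof.
  intros He. apply is_lim_seq_spec. intros eps.
  set (T := exp (ln eps / e)).
  destruct (archimed T) as [HT _].
  exists (Z.to_nat (up T)). intros N HN.
  assert (HTp : 0 < T) by apply exp_pos.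
  assert (Hz : (0 < up T)%Z) by (apply lt_IZR; lra).
  assert (HNT : T < INR N).
  { eapply Rlt_le_trans. exact HT. rewrite <- (Z2Nat.id (up T)) by lia. rewrite <- INR_IZR_INZ. apply le_INR; lia. }
  rewrite Rminus_0_r, Rabs_right by (apply Rle_ge; left; apply exp_pos).
  unfold Rpower. rewrite <- (exp_ln eps) by apply cond_pos.
  apply exp_increasing.
  assert (ln T < ln (INR N)) by (apply ln_increasing; lra).
  unfold T in H. rewrite ln_exp in H.
  apply (Rmult_lt_compat_r (- e)) in H; [|lra].
  replace (ln eps / e * - e) with (- ln eps) in H by (field; lra). lra.
Qed.


Lemma fold_max_le (l : list R) B : 0 <= B -> (forall y, In y l -> y <= B) -> fold_right Rmax 0 l <= B.
Proof.
  induction l; simpl; intros HB H; auto.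
  apply Rmax_lub. apply H; auto. apply IHl; auto.
Qed.
Lemma fold_max_ge (l : list R) : 0 <= fold_right Rmax 0 l.
Proof. induction l; simpl. lra. eapply Rle_trans; [exact IHl| apply Rmax_r]. Qed.

Lemma sup_le N h B : 0 <= B -> (forall x, (x <= N)%nat -> h x <= B) -> sup_grid N h <= B.
Proof.
  intros HB H. unfold sup_grid. apply fold_max_le; auto.
  intros y Hy. apply in_map_iff in Hy. destruct Hy as [x [<- Hx]].
  apply in_seq in Hx. apply H. lia.
Qed.
Lemma sup_ge N h : 0 <= sup_grid N h.
Proof. apply fold_max_ge. Qed.

Lemma squeeze (s t : nat -> R) N0 : (forall N, (N0 <= N)%nat -> 0 <= s N <= t N) ->
  is_lim_seq t 0 -> is_lim_seq s 0.
Proof.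
  intros H Ht. apply is_lim_seq_spec. apply is_lim_seq_spec in Ht.
  intros eps. destruct (Ht eps) as [N1 HN1]. exists (max N0 N1). intros n Hn.
  specialize (H n ltac:(lia)). specialize (HN1 n ltac:(lia)).
  rewrite Rminus_0_r in *. rewrite Rabs_right by lra.
  pose proof (Rle_abs (t n)). lra.
Qed.

Lemma inv_INR_lim : is_lim_seq (fun N => / INR N) 0.
Proof.
  replace (Finite 0) with (Rbar_inv p_infty) by reflexivity.
  apply is_lim_seq_inv. apply is_lim_seq_INR. discriminate.
Qed.

Lemma xN_range N x : (4 <= N)%nat -> (x <= N)%nat -> 0 <= INR x / INR N <= 1.
Proof.
  intros HN Hx. assert (0 < INR N) by (apply lt_0_INR; lia).
  split. apply Rmult_le_pos; [apply pos_INR| left; apply Rinv_0_lt_compat; lra].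
  apply (Rmult_le_reg_r (INR N)); auto. unfold Rdiv. rewrite Rmult_assoc, Rinv_l by lra.
  rewrite Rmult_1_r, Rmult_1_l. apply le_INR; auto.
Qed.

Theorem lemma4p2 (alpha alphaL alphaR beta : R)
  (Halpha : 0 < alpha) (HalphaL : 0 < alphaL) (HalphaR : 0 < alphaR)
  (Hbeta : 0 <= beta < 1)
  (G : R -> R) (HGc : cont_on_01 G) (HGS : in_S alpha G) :
  exists GN : nat -> nat -> R,
    (forall N : nat, GN N 0%nat = 0 /\ GN N N = 0) /\
    is_lim_seq (fun N : nat =>
      sup_grid N (fun x => Rabs (GN N x - G (INR x / INR N)))) 0 /\
    is_lim_seq (fun N : nat =>
      sup_grid N (fun x => Rabs (genA alpha alphaL alphaR beta N (GN N) x
                                 - alpha * second_deriv01 G (INR x / INR N)))) 0.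
Proof.
  set (c := cG G).
  assert (HM : forall j, (j <= 3)%nat -> ex_series (Mb c j)) by (intros; apply (MbG alpha G Halpha HGS); auto).
  assert (dF : forall t, is_derive (Sf c 0) t (Sf c 1 t)) by (intros; apply Sf_derive; apply HM; lia).
  assert (dF1 : forall t, is_derive (Sf c 1) t (Sf c 2 t)) by (intros; apply Sf_derive; apply HM; lia).
  assert (dF2 : forall t, is_derive (Sf c 2) t (Sf c 3 t)) by (intros; apply Sf_derive; apply HM; lia).
  assert (bF1 : forall t, Rabs (Sf c 1 t) <= Series (Mb c 1)) by (intros; apply Sf_bound; apply HM; lia).
  assert (bF3 : forall t, Rabs (Sf c 3 t) <= Series (Mb c 3)) by (intros; apply Sf_bound; apply HM; lia).
  assert (F_0 : Sf c 0 0 = 0) by apply Sf0_0.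
  assert (F_1 : Sf c 0 1 = 0) by apply Sf0_1.
  assert (F2_0 : Sf c 2 0 = 0) by apply Sf2_0.
  assert (F2_1 : Sf c 2 1 = 0) by apply Sf2_1.
  exists (GN alpha alphaL alphaR beta (Sf c 0)).
  split; [|split].
  - intros N. unfold GN. split.
    + simpl. reflexivity.
    + rewrite Nat.leb_refl, Bool.orb_true_r. reflexivity.
  - apply (squeeze _ (fun N => Cpq alpha alphaL alphaR (Series (Mb c 1)) * (Rpower (INR N) (beta - 1) + / INR N)) 4).
    + intros N HN. split. apply sup_ge.
      assert (HN0 : 0 < INR N) by (apply lt_0_INR; lia).
      replace (Rpower (INR N) (beta - 1) + / INR N) with (eN beta N).
      2:{ unfold eN. unfold Rminus at 1.
          rewrite Rpower_plus, Rpower_Ropp, Rpower_1 by lra. field. lra. }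
      apply sup_le.
      { eapply Rle_trans; [|apply (pq_bound alpha alphaL alphaR beta Halpha HalphaL HalphaR Hbeta (Sf c 0) (Sf c 1)); auto].
        pose proof (Rabs_pos (pN alpha alphaL alphaR beta (Sf c 0) N)).
        pose proof (Rabs_pos (qN alpha alphaL alphaR beta (Sf c 0) N)). nra. }
      intros x Hx. rewrite (G_eq_S alpha G Halpha HGc HGS) by (apply xN_range; auto).
      eapply Rle_trans. apply approx_est; auto.
      apply (pq_bound alpha alphaL alphaR beta Halpha HalphaL HalphaR Hbeta (Sf c 0) (Sf c 1)); auto.
    + replace 0 with (Cpq alpha alphaL alphaR (Series (Mb c 1)) * (0 + 0)) by ring.
      apply (is_lim_seq_scal_l _ _ (0 + 0)).
      apply (is_lim_seq_plus' _ _ 0 0). apply rpow_lim; lra. apply inv_INR_lim.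
  - apply (squeeze _ (fun N => 2 * alpha * Series (Mb c 3) * / INR N) 4).
    + intros N HN. split. apply sup_ge.
      assert (0 <= Series (Mb c 3)) by (pose proof (bF3 0); pose proof (Rabs_pos (Sf c 3 0)); lra).
      assert (HN0 : 0 < INR N) by (apply lt_0_INR; lia).
      apply sup_le.
      { apply Rmult_le_pos. apply Rmult_le_pos; lra. left; apply Rinv_0_lt_compat; lra. }
      intros x Hx. rewrite (SD alpha G Halpha HGc HGS) by (apply xN_range; auto).
      apply (gen_est alpha alphaL alphaR beta Halpha HalphaL HalphaR (Sf c 0) (Sf c 1) (Sf c 2) (Sf c 3)); auto.
    + replace 0 with (2 * alpha * Series (Mb c 3) * 0) by ring.
      apply (is_lim_seq_scal_l _ _ 0). apply inv_INR_lim.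
Qed.
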